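(* Let $(X,T)$ be a topological dynamical system, $(x,y)\in X^2$, and $\Delta_X=\{(z,z):z\in X\}$. Let $Z=\overline{\{(T^nx,T^ny):n\in\mathbb{Z}_+\}}\subset X^2$. The following are equivalent: (1) $(x,y)$ is Banach proximal; (2) $\operatorname{supp}(Z,T\times T)\subset\Delta_X$; (3) $Z\subset BP(X,T)$.
   Context: A topological dynamical system $(X,T)$ consists of a non-empty compact metric space $(X,d)$ and a continuous map $T:X\to X$. A set $F\subset\mathbb{Z}_+$ has Banach density one if for every $\lambda<1$ there is $N\ge1$ with $\#(F\cap I)\ge\lambda\,\#(I)$ for every interval of integers $I\subset\mathbb{Z}_+$ with $\#(I)\ge N$. A pair $(x,y)$ is Banach proximal if for every $\varepsilon>0$ the set $\{n\in\mathbb{Z}_+: d(T^nx,T^ny)<\varepsilon\}$ has Banach density one; $BP(X,T)$ is the set of Banach proximal pairs. For a system $(Y,S)$, $M(Y,S)$ is the set of $S$-invariant Borel probability measures and $\operatorname{supp}(Y,S)$ is the smallest closed set $C\subset Y$ with $\mu(C)=1$ for all $\mu\in M(Y,S)$. *)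

(* Defs.v *)
From Stdlib Require Import Reals List.
Open Scope R_scope.

Section Generic.
Variable Y : Type.
Variable d : Y -> Y -> R.

Definition is_metric : Prop :=
  (forall x y, 0 <= d x y) /\ (forall x y, d x y = 0 <-> x = y) /\
  (forall x y, d x y = d y x) /\ (forall x y z, d x z <= d x y + d y z).

Definition open_set (A : Y -> Prop) : Prop :=
  forall y, A y -> exists eps, 0 < eps /\ forall z, d y z < eps -> A z.

Definition closed_set (A : Y -> Prop) : Prop := open_set (fun y => ~ A y).

Definition compact_space : Prop :=
  forall (I : Type) (U : I -> Y -> Prop),
    (forall i, open_set (U i)) -> (forall y, exists i, U i y) ->
    exists l : list I, forall y, exists i, In i l /\ U i y.

Definition continuous_map (T : Y -> Y) : Prop :=
  forall x eps, 0 < eps -> exists delta, 0 < delta /\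
    forall y, d x y < delta -> d (T x) (T y) < eps.

Inductive borel : (Y -> Prop) -> Prop :=
| borel_open : forall A, open_set A -> borel A
| borel_compl : forall A, borel A -> borel (fun y => ~ A y)
| borel_union : forall A : nat -> Y -> Prop, (forall n, borel (A n)) ->
    borel (fun y => exists n, A n y)
| borel_ext : forall A B, borel A -> (forall y, A y <-> B y) -> borel B.

(* Borel probability measure (values on non-Borel sets are irrelevant) *)
Definition prob_measure (mu : (Y -> Prop) -> R) : Prop :=
  mu (fun _ => True) = 1 /\
  (forall A, borel A -> 0 <= mu A) /\
  (forall A : nat -> Y -> Prop, (forall n, borel (A n)) ->
     (forall m n y, m <> n -> A m y -> A n y -> False) ->
     Un_cv (fun N => sum_f_R0 (fun n => mu (A n)) N) (mu (fun y => exists n, A n y))).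

(* invariance w.r.t. the preimage operator [pre] of the dynamics *)
Definition invariant_measure (pre : (Y -> Prop) -> (Y -> Prop))
  (mu : (Y -> Prop) -> R) : Prop :=
  prob_measure mu /\ forall A, borel A -> mu (pre A) = mu A.

(* supp(Y,S): the smallest closed set of full measure for every invariant
   measure, realized as the intersection of all such closed sets. *)
Definition supp (pre : (Y -> Prop) -> (Y -> Prop)) (y : Y) : Prop :=
  forall C, closed_set C ->
    (forall mu, invariant_measure pre mu -> mu C = 1) -> C y.
End Generic.

Definition TDS (X : Type) (d : X -> X -> R) (T : X -> X) : Prop :=
  inhabited X /\ is_metric X d /\ compact_space X d /\ continuous_map X d T.

Fixpoint iterate {X : Type} (T : X -> X) (n : nat) (x : X) : X :=
  match n with O => x | S k => T (iterate T k x) end.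

Definition count_in (F : nat -> bool) (a n : nat) : nat :=
  length (filter F (seq a n)).

Definition banach_density_one (F : nat -> bool) : Prop :=
  forall lam, lam < 1 -> exists N, (1 <= N)%nat /\
    forall a n, (N <= n)%nat -> lam * INR n <= INR (count_in F a n).

Definition banach_proximal {X : Type} (d : X -> X -> R) (T : X -> X) (x y : X) : Prop :=
  forall eps, 0 < eps -> banach_density_one
    (fun n => if Rlt_dec (d (iterate T n x) (iterate T n y)) eps then true else false).

Definition d2 {X : Type} (d : X -> X -> R) (p q : X * X) : R :=
  Rmax (d (fst p) (fst q)) (d (snd p) (snd q)).

Definition TT {X : Type} (T : X -> X) (p : X * X) : X * X := (T (fst p), T (snd p)).

Definition orbit_closure {X : Type} (d : X -> X -> R) (T : X -> X) (x y : X) (p : X * X) : Prop :=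
  forall eps, 0 < eps -> exists n, d2 d p (iterate T n x, iterate T n y) < eps.

Definition Zsub {X : Type} (d : X -> X -> R) (T : X -> X) (x y : X) : Type :=
  { p : X * X | orbit_closure d T x y p }.

Definition dZ {X : Type} (d : X -> X -> R) (T : X -> X) (x y : X)
  (u v : Zsub d T x y) : R := d2 d (proj1_sig u) (proj1_sig v).

Definition preZ {X : Type} (d : X -> X -> R) (T : X -> X) (x y : X)
  (A : Zsub d T x y -> Prop) (z : Zsub d T x y) : Prop :=
  exists w : Zsub d T x y, proj1_sig w = TT T (proj1_sig z) /\ A w.

(* Main.v *)
Require Import Defs.
From Stdlib Require Import Reals List.
Open Scope R_scope.
From Stdlib Require Import Lra Lia Classical ClassicalEpsilon ProofIrrelevance FunctionalExtensionality PropExtensionality.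

Lemma pext {Y : Type} (A B : Y -> Prop) : (forall y, A y <-> B y) -> A = B.
Proof. intro H; apply functional_extensionality; intro y; apply propositional_extensionality; auto. Qed.

Definition Sup (E : R -> Prop) : R :=
  match excluded_middle_informative (bound E /\ exists x, E x) with
  | left h => proj1_sig (completeness E (proj1 h) (proj2 h))
  | right _ => 0 end.

Lemma Sup_ub E r : bound E -> E r -> r <= Sup E.
Proof.
  intros hb hr. unfold Sup. destruct excluded_middle_informative as [h|h].
  - destruct (completeness E _ _) as [m [H1 H2]]; simpl. apply H1; auto.
  - exfalso; apply h; split; eauto.
Qed.

Lemma Sup_least E m : (exists x, E x) -> (forall r, E r -> r <= m) -> Sup E <= m.
Proof.
  intros hx hr. unfold Sup. destruct excluded_middle_informative as [h|h].
  - destruct (completeness E _ _) as [s [H1 H2]]; simpl. apply H2. intros r Hr; auto.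
  - exfalso; apply h; split; auto. exists m; intros r Hr; auto.
Qed.

Lemma Sup_approx E eps : (exists x, E x) -> bound E -> 0 < eps -> exists r, E r /\ Sup E - eps < r.
Proof.
  intros hx hb he. apply NNPP; intro hn.
  assert (Sup E <= Sup E - eps). { apply Sup_least; auto. intros r Hr.
   destruct (Rle_dec r (Sup E - eps)); auto. exfalso; apply hn; exists r; split; auto; lra. }
  lra.
Qed.

Definition Inf (E : R -> Prop) : R := - Sup (fun r => E (- r)).

Lemma Inf_lb E r : (exists m, forall x, E x -> m <= x) -> E r -> Inf E <= r.
Proof.
  intros [m hm] hr. unfold Inf. assert (- r <= Sup (fun r => E (-r))).
  { apply Sup_ub. exists (-m). intros x Hx. specialize (hm _ Hx). lra. rewrite Ropp_involutive; auto. }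
  lra.
Qed.

Lemma Inf_greatest E m : (exists x, E x) -> (forall r, E r -> m <= r) -> m <= Inf E.
Proof.
  intros [x hx] hr. unfold Inf. assert (Sup (fun r => E (-r)) <= - m).
  { apply Sup_least. exists (-x). rewrite Ropp_involutive; auto.
    intros r Hr. specialize (hr _ Hr). lra. }
  lra.
Qed.

Lemma Inf_approx E eps : (exists x, E x) -> (exists m, forall x, E x -> m <= x) -> 0 < eps ->
  exists r, E r /\ r < Inf E + eps.
Proof.
  intros hx hb he. apply NNPP; intro hn.
  assert (Inf E + eps <= Inf E). { apply Inf_greatest; auto. intros r Hr.
   destruct (Rle_dec (Inf E + eps) r); auto. exfalso; apply hn; exists r; split; auto; lra. }
  lra.
Qed.

Fixpoint fsum (f : nat -> R) (n : nat) : R :=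
  match n with O => 0 | S k => fsum f k + f k end.

Lemma fsum_le f g n : (forall i, (i < n)%nat -> f i <= g i) -> fsum f n <= fsum g n.
Proof. induction n; simpl; intros; [lra|]. assert (f n <= g n) by (apply H; lia).
  assert (fsum f n <= fsum g n) by (apply IHn; intros; apply H; lia). lra. Qed.

Lemma fsum_plus f g n : fsum (fun i => f i + g i) n = fsum f n + fsum g n.
Proof. induction n; simpl; lra. Qed.

Lemma fsum_const c n : fsum (fun _ => c) n = INR n * c.
Proof. induction n; simpl fsum; [simpl; lra|]. rewrite IHn, S_INR; lra. Qed.

Lemma fsum_ext f g n : (forall i, (i < n)%nat -> f i = g i) -> fsum f n = fsum g n.
Proof. induction n; simpl; intros; auto. rewrite IHn, H; auto; intros; apply H; lia. Qed.

Lemma fsum_nonneg f n : (forall i, 0 <= f i) -> 0 <= fsum f n.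
Proof. induction n; simpl; intros; [lra|]. specialize (IHn H); specialize (H n); lra. Qed.

Lemma sum_f_R0_fsum f N : sum_f_R0 f N = fsum f (S N).
Proof. induction N; simpl; [lra|]. rewrite IHN; simpl; lra. Qed.

Lemma fsum_mono f n m : (forall i, 0 <= f i) -> (n <= m)%nat -> fsum f n <= fsum f m.
Proof. intros H Hle; induction Hle; [lra|]. simpl; specialize (H m); lra. Qed.

Definition ind (P : Prop) : nat := if excluded_middle_informative P then 1%nat else 0%nat.

Fixpoint ccount (P : nat -> Prop) (a n : nat) : nat :=
  match n with O => O | S k => (ccount P a k + ind (P (a + k)%nat))%nat end.

Lemma ccount_le P a n : (ccount P a n <= n)%nat.
Proof. induction n; simpl; auto. unfold ind; destruct excluded_middle_informative; lia. Qed.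

Lemma ccount_or P Q a n : (forall i, P i -> Q i -> False) ->
  ccount (fun i => P i \/ Q i) a n = (ccount P a n + ccount Q a n)%nat.
Proof. intro H; induction n; simpl; auto. rewrite IHn. unfold ind.
  repeat destruct excluded_middle_informative; try tauto; try lia. exfalso; eauto. Qed.

Lemma ccount_true a n : ccount (fun _ => True) a n = n.
Proof. induction n; simpl; auto. unfold ind; destruct excluded_middle_informative; try tauto; lia. Qed.

Lemma ccount_shift P a n : ccount (fun i => P (S i)) a n = ccount P (S a) n.
Proof. induction n; simpl; auto. Qed.

Lemma ind_le P : (ind P <= 1)%nat.
Proof. unfold ind; destruct excluded_middle_informative; lia. Qed.

Lemma ccount_front P a n : ccount P a (S n) = (ind (P a) + ccount P (S a) n)%nat.
Proof. induction n. simpl. rewrite Nat.add_0_r; lia.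
  change (ccount P a (S (S n))) with (ccount P a (S n) + ind (P (a + S n)%nat))%nat.
  rewrite IHn. simpl. replace (S (a+n)) with (a + S n)%nat by lia. lia. Qed.

Lemma ccount_shift1 P a n : (ccount P (S a) n <= ccount P a n + 1)%nat /\ (ccount P a n <= ccount P (S a) n + 1)%nat.
Proof. pose proof (ccount_front P a n). simpl in H.
  pose proof (ind_le (P a)); pose proof (ind_le (P (a+n)%nat)). lia. Qed.

Lemma iterate_add {X} (T : X -> X) n m z : iterate T (n + m) z = iterate T n (iterate T m z).
Proof. induction n; simpl; auto. rewrite IHn; auto. Qed.

Section Metric.
Variables (X : Type) (d : X -> X -> R).
Hypothesis Hm : is_metric X d.

Lemma d_nonneg a b : 0 <= d a b. Proof. apply Hm. Qed.
Lemma d_sym a b : d a b = d b a. Proof. apply Hm. Qed.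
Lemma d_tri a b c : d a c <= d a b + d b c. Proof. apply Hm. Qed.
Lemma d_refl a : d a a = 0. Proof. apply Hm; auto. Qed.
Lemma d_eq a b : d a b = 0 -> a = b. Proof. apply Hm. Qed.

Lemma d2_nonneg p q : 0 <= Defs.d2 d p q.
Proof. unfold Defs.d2. pose proof (d_nonneg (fst p) (fst q)). pose proof (Rmax_l (d (fst p) (fst q)) (d (snd p) (snd q))). lra. Qed.
Lemma d2_sym p q : Defs.d2 d p q = Defs.d2 d q p.
Proof. unfold Defs.d2. rewrite (d_sym (fst p)), (d_sym (snd p)); auto. Qed.
Lemma d2_tri p q r : Defs.d2 d p r <= Defs.d2 d p q + Defs.d2 d q r.
Proof. unfold Defs.d2. apply Rmax_lub.
  - pose proof (d_tri (fst p) (fst q) (fst r)). pose proof (Rmax_l (d (fst p) (fst q)) (d (snd p) (snd q))).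
    pose proof (Rmax_l (d (fst q) (fst r)) (d (snd q) (snd r))). lra.
  - pose proof (d_tri (snd p) (snd q) (snd r)). pose proof (Rmax_r (d (fst p) (fst q)) (d (snd p) (snd q))).
    pose proof (Rmax_r (d (fst q) (fst r)) (d (snd q) (snd r))). lra. Qed.
Lemma d2_refl p : Defs.d2 d p p = 0.
Proof. unfold Defs.d2; rewrite !d_refl. apply Rmax_left; lra. Qed.
Lemma d2_eq p q : Defs.d2 d p q = 0 -> p = q.
Proof. unfold Defs.d2; intro H. destruct p as [a b], q as [a' b']; simpl in *.
  pose proof (Rmax_l (d a a') (d b b')); pose proof (Rmax_r (d a a') (d b b')).
  pose proof (d_nonneg a a'); pose proof (d_nonneg b b').
  rewrite (d_eq a a'), (d_eq b b'); auto; lra. Qed.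
Lemma d2_lt p q e : Defs.d2 d p q < e -> d (fst p) (fst q) < e /\ d (snd p) (snd q) < e.
Proof. unfold Defs.d2; intro H. pose proof (Rmax_l (d (fst p) (fst q)) (d (snd p) (snd q))); pose proof (Rmax_r (d (fst p) (fst q)) (d (snd p) (snd q))); lra. Qed.
Lemma d2_lt' p q e : d (fst p) (fst q) < e -> d (snd p) (snd q) < e -> Defs.d2 d p q < e.
Proof. unfold Defs.d2; intros; apply Rmax_lub_lt; auto. Qed.

Hypothesis Hc : compact_space X d.

Lemma compact_prod : compact_space (X * X) (Defs.d2 d).
Proof.
  intros I V HV Hcov.
  assert (Hab : forall a b, exists ir : I * R, 0 < snd ir /\ forall q, Defs.d2 d (a, b) q < snd ir -> V (fst ir) q).
  { intros a b. destruct (Hcov (a, b)) as [i Hi]. destruct (HV i _ Hi) as [r [Hr Hr']].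
    exists (i, r); simpl; auto. }
  pose (ir := fun a b => proj1_sig (constructive_indefinite_description _ (Hab a b))).
  assert (Hir : forall a b, 0 < snd (ir a b) /\ forall q, Defs.d2 d (a, b) q < snd (ir a b) -> V (fst (ir a b)) q).
  { intros a b; unfold ir; destruct constructive_indefinite_description; auto. }
  assert (HL : forall a, exists L : list X, forall b, exists b0, In b0 L /\ d b0 b < snd (ir a b0) / 2).
  { intro a. apply (Hc X (fun b0 b => d b0 b < snd (ir a b0) / 2)).
    - intros b0 b Hb. exists (snd (ir a b0) / 2 - d b0 b). split; [lra|].
      intros z Hz. pose proof (d_tri b0 b z). lra.
    - intros b. exists b. rewrite d_refl. destruct (Hir a b). lra. }
  pose (L := fun a => proj1_sig (constructive_indefinite_description _ (HL a))).
  assert (HLs : forall a b, exists b0, In b0 (L a) /\ d b0 b < snd (ir a b0) / 2).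
  { intro a; unfold L; destruct constructive_indefinite_description; auto. }
  pose (rho := fun a => fold_right (fun b0 r => Rmin (snd (ir a b0) / 2) r) 1 (L a)).
  assert (Hrho : forall a, 0 < rho a /\ forall b0, In b0 (L a) -> rho a <= snd (ir a b0) / 2).
  { intro a. unfold rho. induction (L a) as [|c l IH]; simpl.
    - split; [lra| tauto].
    - destruct IH as [IH1 IH2]. destruct (Hir a c) as [Hc1 _]. split.
      + apply Rmin_glb_lt; lra.
      + intros b0 [<-|Hin]. apply Rmin_l. eapply Rle_trans; [apply Rmin_r| auto]. }
  destruct (Hc X (fun a a' => d a a' < rho a)) as [L2 HL2].
  - intros a a' Ha. exists (rho a - d a a'). split; [lra|]. intros z Hz. pose proof (d_tri a a' z). lra.
  - intro a. exists a. rewrite d_refl. apply Hrho.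
  - exists (flat_map (fun a => map (fun b0 => fst (ir a b0)) (L a)) L2).
    intros [a' b']. destruct (HL2 a') as [a [Ha Ha']]. destruct (HLs a b') as [b0 [Hb0 Hb0']].
    exists (fst (ir a b0)). split.
    + apply in_flat_map. exists a; split; auto. apply in_map_iff; exists b0; auto.
    + destruct (Hir a b0) as [Hpos _]. apply (proj2 (Hir a b0)). apply d2_lt'; simpl.
      * destruct (Hrho a) as [_ H]. specialize (H b0 Hb0). lra.
      * lra.
Qed.

End Metric.

Section Dyn.
Variables (X : Type) (d : X -> X -> R) (T : X -> X) (x y : X).
Hypothesis Hm : is_metric X d.
Hypothesis Hc : compact_space X d.
Hypothesis Hcont : continuous_map X d T.

Definition orb n : X * X := (iterate T n x, iterate T n y).
Definition oc := orbit_closure d T x y.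

Lemma oc_orb n : oc (orb n).
Proof. intros e He. exists n. rewrite d2_refl; auto. Qed.

Lemma oc_TT p : oc p -> oc (TT T p).
Proof.
  intros Hp e He. destruct (Hcont (fst p) e He) as [d1 [Hd1 H1]].
  destruct (Hcont (snd p) e He) as [d3 [Hd3 H3]].
  destruct (Hp (Rmin d1 d3)) as [n Hn]. apply Rmin_glb_lt; auto.
  exists (S n). apply d2_lt in Hn. destruct Hn as [Hn1 Hn2]. simpl in *.
  apply d2_lt'; simpl.
  - apply H1. pose proof (Rmin_l d1 d3). lra.
  - apply H3. pose proof (Rmin_r d1 d3). lra.
Qed.

Definition Zs := Zsub d T x y.
Definition TTZ (u : Zs) : Zs := exist _ (TT T (proj1_sig u)) (oc_TT _ (proj2_sig u)).
Definition zo n : Zs := exist _ (orb n) (oc_orb n).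

Lemma sig_eq (u v : Zs) : proj1_sig u = proj1_sig v -> u = v.
Proof. destruct u as [p hp], v as [q hq]; simpl; intro; subst. f_equal; apply proof_irrelevance. Qed.

Lemma zo_S n : TTZ (zo n) = zo (S n).
Proof. apply sig_eq. reflexivity. Qed.

Lemma preZ_eq A : preZ d T x y A = fun w => A (TTZ w).
Proof. apply pext. intro w. unfold preZ. split.
  - intros [v [Hv HA]]. replace (TTZ w) with v; auto. apply sig_eq; auto.
  - intro HA. exists (TTZ w). split; auto. Qed.

Definition dz := dZ d T x y.
Lemma dz_nonneg u v : 0 <= dz u v. Proof. apply d2_nonneg; auto. Qed.
Lemma dz_sym u v : dz u v = dz v u. Proof. apply d2_sym; auto. Qed.
Lemma dz_tri u v w : dz u w <= dz u v + dz v w. Proof. apply d2_tri; auto. Qed.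
Lemma dz_refl u : dz u u = 0. Proof. apply d2_refl; auto. Qed.
Lemma dz_eq u v : dz u v = 0 -> u = v. Proof. intro H; apply sig_eq; apply (d2_eq X d Hm); auto. Qed.

Lemma TTZ_cont u e : 0 < e -> exists del, 0 < del /\ forall v, dz u v < del -> dz (TTZ u) (TTZ v) < e.
Proof.
  intro He. destruct u as [p hp]. destruct (Hcont (fst p) e He) as [d1 [Hd1 H1]].
  destruct (Hcont (snd p) e He) as [d3 [Hd3 H3]].
  exists (Rmin d1 d3). split. apply Rmin_glb_lt; auto.
  intros [q hq] Hq. unfold dz, dZ in *; simpl in *. apply (d2_lt X d) in Hq. destruct Hq.
  apply d2_lt'; simpl.
  - apply H1. pose proof (Rmin_l d1 d3). lra.
  - apply H3. pose proof (Rmin_r d1 d3). lra.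
Qed.

Lemma oc_closed p : ~ oc p -> exists e, 0 < e /\ forall q, Defs.d2 d p q < e -> ~ oc q.
Proof.
  intro H. apply not_all_ex_not in H. destruct H as [e H].
  apply imply_to_and in H. destruct H as [He H].
  exists (e / 2). split; [lra|]. intros q Hq Hoc.
  destruct (Hoc (e/2)) as [n Hn]; [lra|]. apply H. exists n.
  pose proof (d2_tri X d Hm p q (iterate T n x, iterate T n y)). lra.
Qed.

Lemma Zs_compact : compact_space Zs dz.
Proof.
  intros I U HU Hcov.
  pose (V := fun (o : option I) (p : X * X) => match o with
     | None => ~ oc p
     | Some i => exists (z : Zs) r, 0 < r /\ (forall w : Zs, dz z w < r -> U i w) /\ Defs.d2 d (proj1_sig z) p < r end).
  destruct (compact_prod X d Hm Hc (option I) V) as [L HL].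
  - intros [i|] p Hp; simpl in *.
    + destruct Hp as [z [r [Hr [Hz Hd]]]]. exists (r - Defs.d2 d (proj1_sig z) p). split; [lra|].
      intros q Hq. exists z, r. repeat split; auto. pose proof (d2_tri X d Hm (proj1_sig z) p q). lra.
    + destruct (oc_closed p Hp) as [e [He H]]. exists e; split; auto.
  - intro p. destruct (classic (oc p)) as [Hp|Hp].
    + destruct (Hcov (exist _ p Hp)) as [i Hi]. destruct (HU i _ Hi) as [r [Hr Hr']].
      exists (Some i). simpl. exists (exist _ p Hp), r. repeat split; auto. simpl. rewrite d2_refl; auto.
    + exists None; simpl; auto.
  - exists (flat_map (fun o => match o with Some i => i :: nil | None => nil end) L).
    intros w. destruct (HL (proj1_sig w)) as [o [Ho Hw]]. destruct o as [i|].
    + exists i. split. apply in_flat_map. exists (Some i); simpl; auto.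
      destruct Hw as [z [r [Hr [Hz Hd]]]]. apply Hz. exact Hd.
    + simpl in Hw. exfalso; apply Hw. exact (proj2_sig w).
Qed.

End Dyn.

Section Meas.
Variables (W : Type) (dw : W -> W -> R).
Hypothesis dw_nonneg : forall u v, 0 <= dw u v.
Hypothesis dw_sym : forall u v, dw u v = dw v u.
Hypothesis dw_tri : forall u v w, dw u w <= dw u v + dw v w.
Hypothesis dw_refl : forall u, dw u u = 0.
Hypothesis dw_eq : forall u v, dw u v = 0 -> u = v.
Hypothesis Wc : compact_space W dw.

Notation opn := (Defs.open_set W dw).
Notation cls := (Defs.closed_set W dw).

Lemma open_full : opn (fun _ => True).
Proof. intros z _. exists 1; split; auto; lra. Qed.
Lemma open_empty : opn (fun _ => False).
Proof. intros z []. Qed.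
Lemma closed_empty : cls (fun _ => False).
Proof. unfold Defs.closed_set. intros z _. exists 1; split; auto; lra. Qed.
Lemma closed_full : cls (fun _ => True).
Proof. unfold Defs.closed_set. intros z H; tauto. Qed.
Lemma open_or U V : opn U -> opn V -> opn (fun w => U w \/ V w).
Proof. intros HU HV z [Hz|Hz]; [destruct (HU z Hz) as [e [He H]]|destruct (HV z Hz) as [e [He H]]];
  exists e; split; auto. Qed.
Lemma open_and U V : opn U -> opn V -> opn (fun w => U w /\ V w).
Proof. intros HU HV z [Hz1 Hz2]. destruct (HU z Hz1) as [e1 [He1 H1]]. destruct (HV z Hz2) as [e2 [He2 H2]].
  exists (Rmin e1 e2). split. apply Rmin_glb_lt; auto. intros w Hw.
  pose proof (Rmin_l e1 e2); pose proof (Rmin_r e1 e2). split; [apply H1|apply H2]; lra. Qed.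
Lemma open_ex (U : nat -> W -> Prop) : (forall n, opn (U n)) -> opn (fun w => exists n, U n w).
Proof. intros HU z [n Hz]. destruct (HU n z Hz) as [e [He H]]. exists e; split; auto. intros w Hw; exists n; auto. Qed.
Lemma closed_open_compl K : cls K -> opn (fun w => ~ K w).
Proof. auto. Qed.
Lemma open_closed_compl U : opn U -> cls (fun w => ~ U w).
Proof. intro H. unfold Defs.closed_set. replace (fun y => ~ ~ U y) with U; auto. apply pext; intro; tauto. Qed.
Lemma closed_or K L : cls K -> cls L -> cls (fun w => K w \/ L w).
Proof. intros HK HL. unfold Defs.closed_set. replace (fun y => ~ (K y \/ L y)) with (fun y => ~ K y /\ ~ L y).
  apply open_and; auto. apply pext; intro; tauto. Qed.
Lemma closed_and K L : cls K -> cls L -> cls (fun w => K w /\ L w).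
Proof. intros HK HL. unfold Defs.closed_set. replace (fun y => ~ (K y /\ L y)) with (fun y => ~ K y \/ ~ L y).
  apply open_or; auto. apply pext; intro; tauto. Qed.
Lemma open_diff U K : opn U -> cls K -> opn (fun w => U w /\ ~ K w).
Proof. intros; apply open_and; auto. Qed.

Lemma compact_closed_cover {I : Type} (K : W -> Prop) (U : I -> W -> Prop) :
  cls K -> (forall i, opn (U i)) -> (forall w, K w -> exists i, U i w) ->
  exists L : list I, forall w, K w -> exists i, In i L /\ U i w.
Proof.
  intros HK HU Hcov.
  destruct (Wc (option I) (fun o w => match o with None => ~ K w | Some i => U i w end)) as [L HL].
  - intros [i|]; auto.
  - intros w. destruct (classic (K w)) as [Hw|Hw]. destruct (Hcov w Hw) as [i Hi]. exists (Some i); auto.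
    exists None; auto.
  - exists (flat_map (fun o => match o with Some i => i :: nil | None => nil end) L).
    intros w Hw. destruct (HL w) as [[i|] [Ho Hi]].
    + exists i; split; auto. apply in_flat_map. exists (Some i); simpl; auto.
    + tauto.
Qed.

Definition distc (S : W -> Prop) (z : W) : R :=
  Inf (fun r => r = 1 \/ exists s, S s /\ r = Rmin 1 (dw z s)).

Lemma distc_lb S z : exists m, forall r, (r = 1 \/ exists s, S s /\ r = Rmin 1 (dw z s)) -> m <= r.
Proof. exists 0. intros r [->|[s [_ ->]]]. lra. apply Rmin_glb; [lra|apply dw_nonneg]. Qed.

Lemma distc_nonneg S z : 0 <= distc S z.
Proof. apply Inf_greatest. exists 1; auto. intros r [->|[s [_ ->]]]. lra. apply Rmin_glb; [lra|apply dw_nonneg]. Qed.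

Lemma distc_le1 S z : distc S z <= 1.
Proof. apply Inf_lb. apply distc_lb. auto. Qed.

Lemma distc_in S z : S z -> distc S z = 0.
Proof. intro H. apply Rle_antisym; [|apply distc_nonneg]. replace 0 with (Rmin 1 (dw z z)).
  apply Inf_lb. apply distc_lb. right; exists z; auto. rewrite dw_refl. apply Rmin_right; lra. Qed.

Lemma distc_lip S z z' : distc S z <= distc S z' + dw z z'.
Proof.
  assert (distc S z - dw z z' <= distc S z'); [|lra].
  apply Inf_greatest. exists 1; auto. intros r [->|[s [Hs ->]]].
  - pose proof (distc_le1 S z); pose proof (dw_nonneg z z'); lra.
  - assert (distc S z <= Rmin 1 (dw z s)). { apply Inf_lb. apply distc_lb. right; exists s; auto. }
    pose proof (dw_tri z z' s). pose proof (dw_nonneg z z').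
    unfold Rmin in *. repeat destruct Rle_dec; lra.
Qed.

Lemma distc_pos S z r : 0 < r -> (forall s, S s -> r <= dw z s) -> 0 < distc S z.
Proof.
  intros Hr H. apply Rlt_le_trans with (Rmin 1 r). apply Rmin_glb_lt; lra.
  apply Inf_greatest. exists 1; auto. intros q [->|[s [Hs ->]]]. apply Rmin_l.
  specialize (H s Hs). unfold Rmin; repeat destruct Rle_dec; lra.
Qed.

Lemma distc_open_pos U z : opn U -> U z -> 0 < distc (fun w => ~ U w) z.
Proof. intros HU Hz. destruct (HU z Hz) as [e [He H]]. apply distc_pos with e; auto.
  intros s Hs. destruct (Rlt_dec (dw z s) e); auto. exfalso; apply Hs; auto. lra. Qed.

Lemma closed_le (g h : W -> R) : (forall z z', g z <= g z' + dw z z') -> (forall z z', h z <= h z' + dw z z') ->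
  cls (fun w => g w <= h w).
Proof.
  intros Hg Hh. unfold Defs.closed_set. intros z Hz. apply Rnot_le_lt in Hz.
  exists ((g z - h z) / 2). split; [lra|]. intros w Hw.
  pose proof (Hg z w). pose proof (Hh w z). rewrite dw_sym in H0. lra.
Qed.

Lemma shrink U V K : opn U -> opn V -> cls K -> (forall w, K w -> U w \/ V w) ->
  exists K1 K2, cls K1 /\ cls K2 /\ (forall w, K1 w -> U w) /\ (forall w, K2 w -> V w) /\
     (forall w, K w -> K1 w \/ K2 w).
Proof.
  intros HU HV HK Hcov.
  set (gU := distc (fun w => ~ U w)). set (gV := distc (fun w => ~ V w)).
  exists (fun w => K w /\ gV w <= gU w), (fun w => K w /\ gU w <= gV w).
  split; [apply closed_and; auto; apply closed_le; apply distc_lip|].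
  split; [apply closed_and; auto; apply closed_le; apply distc_lip|].
  split; [|split].
  - intros w [Hw Hle]. apply NNPP; intro HnU. assert (gU w = 0) by (apply distc_in; auto).
    destruct (Hcov w Hw) as [?|HVw]; [tauto|]. pose proof (distc_open_pos V w HV HVw). fold gV in H0. lra.
  - intros w [Hw Hle]. apply NNPP; intro HnV. assert (gV w = 0) by (apply distc_in; auto).
    destruct (Hcov w Hw) as [HUw|?]; [|tauto]. pose proof (distc_open_pos U w HU HUw). fold gU in H0. lra.
  - intros w Hw. destruct (Rle_dec (gV w) (gU w)); [left|right]; split; auto; lra.
Qed.

Variable nu : (W -> Prop) -> R.
Hypothesis nu_nonneg : forall A, 0 <= nu A.
Hypothesis nu_add : forall A B, (forall w, A w -> B w -> False) -> nu (fun w => A w \/ B w) = nu A + nu B.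
Hypothesis nu_full : nu (fun _ => True) = 1.

Lemma nu_empty : nu (fun _ => False) = 0.
Proof. pose proof (nu_add (fun _ => False) (fun _ => False)) as H. cbv beta in H.
  replace (fun w : W => False \/ False) with (fun _ : W => False) in H by (apply pext; intro; tauto).
  assert (nu (fun _ => False) = nu (fun _ => False) + nu (fun _ => False)) by (apply H; auto). clear H. lra. Qed.

Lemma nu_mono A B : (forall w, A w -> B w) -> nu A <= nu B.
Proof. intro H. replace B with (fun w => A w \/ (B w /\ ~ A w)).
  rewrite nu_add. pose proof (nu_nonneg (fun w => B w /\ ~ A w)). lra. intros w ? []; auto.
  apply pext; intro w. split. intros [?|[]]; auto. intro. destruct (classic (A w)); auto. Qed.

Lemma nu_le1 A : nu A <= 1.
Proof. rewrite <- nu_full. apply nu_mono; auto. Qed.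

Lemma nu_sub A B : nu (fun w => A w \/ B w) <= nu A + nu B.
Proof. replace (fun w => A w \/ B w) with (fun w => A w \/ (B w /\ ~ A w)).
  rewrite nu_add. pose proof (nu_mono (fun w => B w /\ ~ A w) B). assert (nu (fun w => B w /\ ~ A w) <= nu B) by (apply H; tauto). lra.
  intros w ? []; auto. apply pext; intro w; tauto. Qed.

Definition nuI (U : W -> Prop) : R :=
  Sup (fun r => exists K, cls K /\ (forall w, K w -> U w) /\ r = nu K).

Lemma nuI_ge U K : cls K -> (forall w, K w -> U w) -> nu K <= nuI U.
Proof. intros HK HKU. apply Sup_ub. exists 1. intros r [K' [_ [_ ->]]]. apply nu_le1. exists K; auto. Qed.

Lemma nuI_le U m : (forall K, cls K -> (forall w, K w -> U w) -> nu K <= m) -> nuI U <= m.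
Proof. intros H. apply Sup_least. exists (nu (fun _ => False)). exists (fun _ => False). split; [apply closed_empty|split; auto; tauto].
  intros r [K [HK [HKU ->]]]. auto. Qed.

Lemma nuI_nonneg U : 0 <= nuI U.
Proof. rewrite <- nu_empty. apply nuI_ge. apply closed_empty. tauto. Qed.

Lemma nuI_le1 U : nuI U <= 1.
Proof. apply nuI_le. intros; apply nu_le1. Qed.

Lemma nuI_mono U V : (forall w, U w -> V w) -> nuI U <= nuI V.
Proof. intro H. apply nuI_le. intros K HK HKU. apply nuI_ge; auto. Qed.

Lemma nuI_approx U e : 0 < e -> exists K, cls K /\ (forall w, K w -> U w) /\ nuI U - e < nu K.
Proof. intro He. destruct (Sup_approx (fun r => exists K, cls K /\ (forall w, K w -> U w) /\ r = nu K) e) as [r [[K [HK [HKU ->]]] Hr]]; auto.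
  exists (nu (fun _ => False)). exists (fun _ => False). split; [apply closed_empty|split; auto; tauto].
  exists 1. intros r [K' [_ [_ ->]]]. apply nu_le1.
  exists K; auto. Qed.

Definition mu (A : W -> Prop) : R :=
  Inf (fun r => exists U, opn U /\ (forall w, A w -> U w) /\ r = nuI U).

Lemma mu_le A U : opn U -> (forall w, A w -> U w) -> mu A <= nuI U.
Proof. intros HU HAU. apply Inf_lb. exists 0. intros r [U' [_ [_ ->]]]. apply nuI_nonneg. exists U; auto. Qed.

Lemma mu_ge A m : (forall U, opn U -> (forall w, A w -> U w) -> m <= nuI U) -> m <= mu A.
Proof. intro H. apply Inf_greatest. exists (nuI (fun _ => True)), (fun _ => True). split; [apply open_full|auto].
  intros r [U [HU [HAU ->]]]; auto. Qed.

Lemma mu_approx A e : 0 < e -> exists U, opn U /\ (forall w, A w -> U w) /\ nuI U < mu A + e.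
Proof. intro He. destruct (Inf_approx (fun r => exists U, opn U /\ (forall w, A w -> U w) /\ r = nuI U) e) as [r [[U [HU [HAU ->]]] Hr]]; auto.
  exists (nuI (fun _ => True)), (fun _ => True). split; [apply open_full|auto].
  exists 0. intros r [U' [_ [_ ->]]]. apply nuI_nonneg.
  exists U; auto. Qed.

Lemma mu_nonneg A : 0 <= mu A.
Proof. apply mu_ge. intros; apply nuI_nonneg. Qed.

Lemma mu_mono A B : (forall w, A w -> B w) -> mu A <= mu B.
Proof. intro H. apply mu_ge. intros U HU HBU. apply mu_le; auto. Qed.

Lemma mu_closed_ge K : cls K -> nu K <= mu K.
Proof. intro HK. apply mu_ge. intros U HU HKU. apply nuI_ge; auto. Qed.

Lemma mu_full : mu (fun _ => True) = 1.
Proof. apply Rle_antisym.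
  - eapply Rle_trans. apply mu_le with (U := fun _ => True). apply open_full. auto. apply nuI_le1.
  - rewrite <- nu_full. apply mu_closed_ge. apply closed_full. Qed.

Lemma mu_empty : mu (fun _ => False) = 0.
Proof. apply Rle_antisym; [|apply mu_nonneg]. eapply Rle_trans. apply mu_le with (U := fun _ => False). apply open_empty. auto.
  apply nuI_le. intros K _ HK. rewrite <- nu_empty. apply nu_mono; auto. Qed.


Lemma nuI_sub2 U V : opn U -> opn V -> nuI (fun w => U w \/ V w) <= nuI U + nuI V.
Proof. intros HU HV. apply nuI_le. intros K HK HKUV.
  destruct (shrink U V K HU HV HK HKUV) as [K1 [K2 [H1 [H2 [H3 [H4 H5]]]]]].
  eapply Rle_trans. apply nu_mono with (B := fun w => K1 w \/ K2 w). auto.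
  eapply Rle_trans. apply nu_sub. pose proof (nuI_ge U K1 H1 H3). pose proof (nuI_ge V K2 H2 H4). lra. Qed.

Lemma nuI_empty : nuI (fun _ => False) = 0.
Proof. apply Rle_antisym; [|apply nuI_nonneg]. apply nuI_le. intros K _ HK. rewrite <- nu_empty. apply nu_mono; auto. Qed.

Definition Ule (U : nat -> W -> Prop) N := fun w => exists n, (n < N)%nat /\ U n w.

Lemma Ule_open U N : (forall n, opn (U n)) -> opn (Ule U N).
Proof. intros HU z [n [Hn Hz]]. destruct (HU n z Hz) as [e [He H]]. exists e; split; auto.
  intros w Hw. exists n; auto. Qed.

Lemma Ule_S U N : Ule U (S N) = (fun w => Ule U N w \/ U N w).
Proof. apply pext; intro w; unfold Ule; split.
  - intros [n [Hn Hw]]. destruct (Nat.eq_dec n N) as [->|]; [right; auto|left; exists n; split; auto; lia].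
  - intros [[n [Hn Hw]]|Hw]; [exists n; split; auto; lia|exists N; split; auto]. Qed.

Lemma nuI_Ule U N : (forall n, opn (U n)) -> nuI (Ule U N) <= fsum (fun n => nuI (U n)) N.
Proof. intro HU. induction N; simpl.
  - replace (Ule U 0) with (fun _ : W => False). rewrite nuI_empty; lra.
    apply pext; intro w; unfold Ule; split; [tauto|intros [n [Hn _]]; lia].
  - rewrite Ule_S. eapply Rle_trans. apply nuI_sub2. apply Ule_open; auto. auto. lra. Qed.

Fixpoint lmax (l : list nat) : nat := match l with nil => O | a :: l => Nat.max a (lmax l) end.
Lemma lmax_in l n : In n l -> (n <= lmax l)%nat.
Proof. induction l; simpl; [tauto|]. intros [->|H]; [lia|]. specialize (IHl H); lia. Qed.

Lemma nuI_count U Sb : (forall n, opn (U n)) -> (forall N, fsum (fun n => nuI (U n)) N <= Sb) ->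
  nuI (fun w => exists n, U n w) <= Sb.
Proof. intros HU HS. apply nuI_le. intros K HK HKU.
  destruct (compact_closed_cover K U HK HU HKU) as [L HL].
  eapply Rle_trans; [|apply (HS (S (lmax L)))]. eapply Rle_trans; [|apply nuI_Ule; auto].
  apply nuI_ge; auto. intros w Hw. destruct (HL w Hw) as [i [Hi Hw']]. exists i; split; auto.
  apply lmax_in in Hi; lia. Qed.

Lemma fsum_scal c f N : fsum (fun n => c * f n) N = c * fsum f N.
Proof. induction N; simpl; [lra|]. rewrite IHN; lra. Qed.

Lemma geom N : fsum (fun n => / 2 ^ (S n)) N = 1 - / 2 ^ N.
Proof. induction N. simpl; lra.
  change (fsum (fun n => / 2 ^ S n) (S N)) with (fsum (fun n => / 2 ^ S n) N + / 2 ^ S N). rewrite IHN.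
  assert (0 < 2 ^ N) by (apply pow_lt; lra). simpl. field. lra. Qed.

Lemma mu_count A Sb : (forall N, fsum (fun n => mu (A n)) N <= Sb) -> mu (fun w => exists n, A n w) <= Sb.
Proof.
  intro HS. apply Rnot_lt_le; intro Hlt. set (e := (mu (fun w => exists n, A n w) - Sb) / 2).
  assert (He : 0 < e) by (unfold e; lra).
  assert (Hp : forall n, 0 < e / 2 ^ (S n)). { intro n. apply Rdiv_lt_0_compat; auto. apply pow_lt; lra. }
  pose (U := fun n => proj1_sig (constructive_indefinite_description _ (mu_approx (A n) _ (Hp n)))).
  assert (HU : forall n, opn (U n) /\ (forall w, A n w -> U n w) /\ nuI (U n) < mu (A n) + e / 2 ^ (S n)).
  { intro n. unfold U. destruct constructive_indefinite_description; auto. }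
  assert (mu (fun w => exists n, A n w) <= Sb + e); [|unfold e in *; lra].
  eapply Rle_trans. apply mu_le with (U := fun w => exists n, U n w). apply open_ex; intro n; apply HU.
  intros w [n Hw]; exists n; apply HU; auto.
  apply nuI_count. intro; apply HU. intro N.
  eapply Rle_trans. apply fsum_le with (g := fun n => mu (A n) + e * / 2 ^ (S n)). intros i _. destruct (HU i) as [_ [_ H]]. unfold Rdiv in H. lra.
  rewrite fsum_plus. specialize (HS N).
  assert (fsum (fun n => e * / 2 ^ S n) N <= e).
  { rewrite fsum_scal, geom. assert (0 < / 2 ^ N) by (apply Rinv_0_lt_compat, pow_lt; lra). nra. }
  lra.
Qed.

Lemma mu_sub2 A B : mu (fun w => A w \/ B w) <= mu A + mu B.
Proof. apply Rnot_lt_le; intro Hlt. set (e := (mu (fun w => A w \/ B w) - mu A - mu B) / 3).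
  assert (He : 0 < e) by (unfold e; lra).
  destruct (mu_approx A e He) as [U [HU [HAU HU']]]. destruct (mu_approx B e He) as [V [HV [HBV HV']]].
  assert (mu (fun w => A w \/ B w) <= nuI U + nuI V).
  { eapply Rle_trans. apply mu_le with (U := fun w => U w \/ V w). apply open_or; auto. intros w [?|?]; auto. apply nuI_sub2; auto. }
  unfold e in *; lra. Qed.

Lemma mu_open_cara E A : opn E -> mu (fun w => A w /\ E w) + mu (fun w => A w /\ ~ E w) <= mu A.
Proof.
  intro HE. apply Rnot_lt_le; intro Hlt. set (e := (mu (fun w => A w /\ E w) + mu (fun w => A w /\ ~ E w) - mu A) / 3).
  assert (He : 0 < e) by (unfold e; lra).
  destruct (mu_approx A e He) as [V [HV [HAV HV']]].
  destruct (nuI_approx (fun w => V w /\ E w) e He) as [K [HK [HKVE HK']]].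
  assert (H1 : mu (fun w => A w /\ E w) <= nuI (fun w => V w /\ E w)). { apply mu_le. apply open_and; auto. intros w []; auto. }
  assert (H2 : mu (fun w => A w /\ ~ E w) <= nuI (fun w => V w /\ ~ K w)).
  { apply mu_le. apply open_diff; auto. intros w [Hw1 Hw2]. split; auto. intro HKw. apply Hw2, HKVE; auto. }
  assert (H3 : nu K + nuI (fun w => V w /\ ~ K w) <= nuI V).
  { assert (nuI (fun w => V w /\ ~ K w) <= nuI V - nu K); [|lra]. apply nuI_le. intros K' HK2 HK'V.
    assert (nu (fun w => K w \/ K' w) <= nuI V). { apply nuI_ge. apply closed_or; auto. intros w [?|?]. apply HKVE; auto. apply HK'V; auto. }
    rewrite nu_add in H. lra. intros w Hw Hw'. apply HK'V in Hw'. tauto. }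
  unfold e in *; lra.
Qed.

Definition cmeas (E : W -> Prop) := forall A, mu (fun w => A w /\ E w) + mu (fun w => A w /\ ~ E w) <= mu A.

Lemma mu_split A E : mu A <= mu (fun w => A w /\ E w) + mu (fun w => A w /\ ~ E w).
Proof. replace A with (fun w => (A w /\ E w) \/ (A w /\ ~ E w)) at 1. apply mu_sub2.
  apply pext; intro w; destruct (classic (E w)); tauto. Qed.

Lemma cmeas_eq E A : cmeas E -> mu (fun w => A w /\ E w) + mu (fun w => A w /\ ~ E w) = mu A.
Proof. intro H. apply Rle_antisym; auto. apply mu_split. Qed.

Lemma cmeas_compl E : cmeas E -> cmeas (fun w => ~ E w).
Proof. intros H A. replace (fun w => A w /\ ~ ~ E w) with (fun w => A w /\ E w).
  pose proof (H A); lra. apply pext; intro w; tauto. Qed.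

Lemma cmeas_or E F : cmeas E -> cmeas F -> cmeas (fun w => E w \/ F w).
Proof. intros HE HF A.
  assert (h1 : mu (fun w => A w /\ (E w \/ F w)) <= mu (fun w => A w /\ E w) + mu (fun w => (A w /\ ~ E w) /\ F w)).
  { replace (fun w => A w /\ (E w \/ F w)) with (fun w => (A w /\ E w) \/ ((A w /\ ~ E w) /\ F w)). apply mu_sub2.
    apply pext; intro w; destruct (classic (E w)); tauto. }
  replace (fun w => A w /\ ~ (E w \/ F w)) with (fun w => (A w /\ ~ E w) /\ ~ F w).
  pose proof (HF (fun w => A w /\ ~ E w)). pose proof (HE A). lra.
  apply pext; intro w; tauto. Qed.

Lemma cmeas_and E F : cmeas E -> cmeas F -> cmeas (fun w => E w /\ F w).
Proof. intros HE HF. replace (fun w => E w /\ F w) with (fun w => ~ (~ E w \/ ~ F w)).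
  apply cmeas_compl, cmeas_or; apply cmeas_compl; auto. apply pext; intro w; tauto. Qed.

Lemma cmeas_ext E F : cmeas E -> (forall w, E w <-> F w) -> cmeas F.
Proof. intros H h. replace F with E; auto. apply pext; auto. Qed.

Lemma cmeas_fin_add (E : nat -> W -> Prop) A N : (forall n, cmeas (E n)) ->
  (forall m n w, m <> n -> E m w -> E n w -> False) ->
  mu (fun w => A w /\ Ule E N w) = fsum (fun n => mu (fun w => A w /\ E n w)) N.
Proof. intros HE Hd. induction N; simpl.
  - replace (fun w => A w /\ Ule E 0 w) with (fun _ : W => False). apply mu_empty.
    apply pext; intro w; unfold Ule; split; [tauto|intros [_ [n [Hn _]]]; lia].
  - rewrite <- IHN. rewrite <- (cmeas_eq (E N) (fun w => A w /\ Ule E (S N) w) (HE N)).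
    rewrite Rplus_comm. f_equal.
    + f_equal. apply pext; intro w. rewrite Ule_S. split.
      * intros [[Ha [Hu|Hu]] Hn]; [split; auto|tauto].
      * intros [Ha Hu]. split; [split; auto; left; auto|]. intro Hn. destruct Hu as [n [Hn' Hu]]. apply (Hd n N w); auto; lia.
    + f_equal. apply pext; intro w. rewrite Ule_S. tauto. Qed.

Lemma cmeas_Ule (E : nat -> W -> Prop) N : (forall n, cmeas (E n)) -> cmeas (Ule E N).
Proof. intro HE. induction N.
  - apply cmeas_ext with (fun _ => False). intro A. replace (fun w => A w /\ False) with (fun _ : W => False).
    rewrite mu_empty. replace (fun w => A w /\ ~ False) with A. lra. apply pext; intro; tauto. apply pext; intro; tauto.
    intro w; unfold Ule; split; [tauto|intros [n [Hn _]]; lia].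
  - rewrite Ule_S. apply cmeas_or; auto. Qed.

Lemma cmeas_ex_disj (E : nat -> W -> Prop) : (forall n, cmeas (E n)) ->
  (forall m n w, m <> n -> E m w -> E n w -> False) -> cmeas (fun w => exists n, E n w).
Proof. intros HE Hd A.
  assert (H : forall N, fsum (fun n => mu (fun w => A w /\ E n w)) N <= mu A - mu (fun w => A w /\ ~ exists n, E n w)).
  { intro N. rewrite <- cmeas_fin_add; auto. pose proof (cmeas_Ule E N HE A).
    assert (mu (fun w => A w /\ ~ (exists n, E n w)) <= mu (fun w => A w /\ ~ Ule E N w)).
    { apply mu_mono. intros w [Ha Hn]; split; auto. intros [n [_ Hw]]; apply Hn; exists n; auto. }
    lra. }
  assert (mu (fun w => A w /\ exists n, E n w) <= mu A - mu (fun w => A w /\ ~ exists n, E n w)); [|lra].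
  replace (fun w => A w /\ exists n, E n w) with (fun w => exists n, A w /\ E n w).
  apply mu_count; auto. apply pext; intro w; split. intros [n [? ?]]; split; eauto. intros [? [n ?]]; eauto. Qed.

Lemma least_index (E : nat -> W -> Prop) w : (exists n, E n w) -> exists n, E n w /\ forall m, (m < n)%nat -> ~ E m w.
Proof. intros [n Hn]. induction n as [n IH] using (well_founded_induction Wf_nat.lt_wf).
  destruct (classic (exists m, (m < n)%nat /\ E m w)) as [[m [Hm Hm']]|Hno].
  - apply (IH m); auto.
  - exists n; split; auto. intros m Hm Hm'. apply Hno; eauto. Qed.

Lemma cmeas_ex (E : nat -> W -> Prop) : (forall n, cmeas (E n)) -> cmeas (fun w => exists n, E n w).
Proof. intro HE.
  apply cmeas_ext with (fun w => exists n, E n w /\ ~ Ule E n w).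
  - apply cmeas_ex_disj. intro n. apply cmeas_and; auto. apply cmeas_compl, cmeas_Ule; auto.
    intros m n w Hmn [Hm Hm'] [Hn Hn']. destruct (Nat.lt_total m n) as [H|[H|H]]; [apply Hn'; exists m; auto|tauto|apply Hm'; exists n; auto].
  - intro w; split. intros [n [Hn _]]; eauto. intro H. destruct (least_index E w H) as [n [Hn Hmin]].
    exists n; split; auto. intros [m [Hm Hm']]. apply (Hmin m); auto. Qed.

Lemma borel_cmeas A : Defs.borel W dw A -> cmeas A.
Proof. induction 1.
  - intro B. apply mu_open_cara; auto.
  - apply cmeas_compl; auto.
  - apply cmeas_ex; auto.
  - apply cmeas_ext with A; auto. Qed.

Lemma mu_countable_add (E : nat -> W -> Prop) : (forall n, cmeas (E n)) ->
  (forall m n w, m <> n -> E m w -> E n w -> False) ->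
  Un_cv (fun N => sum_f_R0 (fun n => mu (E n)) N) (mu (fun w => exists n, E n w)).
Proof. intros HE Hd.
  assert (Hfin : forall N, fsum (fun n => mu (E n)) N <= mu (fun w => exists n, E n w)).
  { intro N. pose proof (cmeas_fin_add E (fun _ => True) N HE Hd) as H. cbv beta in H.
    replace (fun w => True /\ Ule E N w) with (Ule E N) in H by (apply pext; intro; tauto).
    assert (Hx : fsum (fun n => mu (E n)) N = fsum (fun n => mu (fun w => True /\ E n w)) N).
    { apply fsum_ext. intros i _. f_equal. apply pext; intro; tauto. }
    rewrite Hx, <- H. apply mu_mono. intros w Hw. destruct Hw as [n [Hn Hw]]. exists n; exact Hw. }
  intros e He. set (L := mu (fun w => exists n, E n w)).
  assert (exists N, L - e < fsum (fun n => mu (E n)) N) as [N HN].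
  { apply NNPP; intro Hn. assert (L <= L - e). apply mu_count. intro N. destruct (Rle_dec (fsum (fun n => mu (E n)) N) (L - e)); auto.
    exfalso; apply Hn; exists N; lra. lra. }
  exists N. intros n Hn. unfold R_dist. rewrite sum_f_R0_fsum.
  assert (fsum (fun n => mu (E n)) N <= fsum (fun n => mu (E n)) (S n)). apply fsum_mono. intro; apply mu_nonneg. lia.
  specialize (Hfin (S n)). rewrite Rabs_left1; fold L in Hfin; lra. Qed.


Lemma mu_list_zero {I : Type} (L : list I) (V : I -> W -> Prop) :
  (forall i, In i L -> mu (V i) = 0) -> mu (fun w => exists i, In i L /\ V i w) = 0.
Proof. induction L as [|a L IH]; intro H.
  - replace (fun w => exists i, In i nil /\ V i w) with (fun _ : W => False). apply mu_empty.
    apply pext; intro w; split; [tauto|intros [i [[] _]]].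
  - apply Rle_antisym; [|apply mu_nonneg].
    replace (fun w => exists i, In i (a :: L) /\ V i w) with (fun w => V a w \/ exists i, In i L /\ V i w).
    eapply Rle_trans. apply mu_sub2. rewrite H, IH; simpl; auto. lra. intros; apply H; simpl; auto.
    apply pext; intro w; split. intros [Hw|[i [Hi Hw]]]; [exists a; simpl; auto|exists i; simpl; auto].
    intros [i [[<-|Hi] Hw]]; [left; auto|right; eauto]. Qed.

Lemma support_point B : cls B -> 0 < mu B -> exists z, B z /\ forall V, opn V -> V z -> 0 < mu V.
Proof. intros HB Hpos. apply NNPP; intro Hn.
  assert (Hz : forall z, exists V, opn V /\ mu V = 0 /\ (B z -> V z)).
  { intros z. destruct (classic (B z)) as [Hbz|Hbz].
    - apply NNPP; intro H. apply Hn. exists z; split; auto. intros V HV HVz.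
      destruct (Rlt_dec 0 (mu V)); auto. exfalso; apply H. exists V; repeat split; auto.
      pose proof (mu_nonneg V); lra.
    - exists (fun _ => False). split; [apply open_empty|split; [apply mu_empty|tauto]]. }
  pose (Vz := fun z => proj1_sig (constructive_indefinite_description _ (Hz z))).
  assert (HVz : forall z, opn (Vz z) /\ mu (Vz z) = 0 /\ (B z -> Vz z z)).
  { intro z; unfold Vz; destruct constructive_indefinite_description; auto. }
  destruct (compact_closed_cover B Vz HB) as [L HL].
  - intro z; apply HVz.
  - intros z Hbz. exists z. apply HVz; auto.
  - assert (mu B <= 0); [|lra]. rewrite <- (mu_list_zero L Vz).
    + apply mu_mono. intros w Hw. apply HL; auto.
    + intros z _. apply HVz.
Qed.

Lemma support_in_closed z C : (forall V, opn V -> V z -> 0 < mu V) -> cls C -> mu C = 1 -> C z.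
Proof. intros Hz HC H1. apply NNPP; intro Hn.
  pose proof (Hz (fun w => ~ C w) HC Hn).
  assert (Hm : cmeas C). { apply cmeas_ext with (fun w => ~ ~ C w). apply cmeas_compl. intro A. apply mu_open_cara; auto.
    intro; tauto. }
  pose proof (cmeas_eq C (fun _ => True) Hm). cbv beta in H0.
  replace (fun _ : W => True /\ C _) with C in H0 by (apply pext; intro; tauto).
  replace (fun _ : W => True /\ ~ C _) with (fun w => ~ C w) in H0 by (apply pext; intro; tauto).
  rewrite mu_full in H0. lra. Qed.

Variable f : W -> W.
Hypothesis f_cont : forall u e, 0 < e -> exists del, 0 < del /\ forall v, dw u v < del -> dw (f u) (f v) < e.
Hypothesis nu_inv : forall K, nu (fun w => K (f w)) = nu K.

Lemma open_pre U : opn U -> opn (fun w => U (f w)).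
Proof. intros HU z Hz. destruct (HU (f z) Hz) as [e [He H]]. destruct (f_cont z e He) as [del [Hd Hd']].
  exists del; split; auto. Qed.

Lemma closed_pre K : cls K -> cls (fun w => K (f w)).
Proof. intro HK. apply open_pre in HK. auto. Qed.

Lemma img_closed K : cls K -> cls (fun v => exists k, K k /\ v = f k).
Proof.
  intro HK. unfold Defs.closed_set. intros v Hv.
  assert (Hex : forall k, exists de : R * R, 0 < fst de /\ 0 < snd de /\
     (K k -> snd de <= dw (f k) v / 2 /\ forall w, dw k w < fst de -> dw (f k) (f w) < snd de)).
  { intro k. destruct (classic (K k)) as [Hk|Hk].
    - assert (Hpos : 0 < dw (f k) v). { destruct (dw_nonneg (f k) v) as [h|h]; auto. exfalso. apply Hv. exists k; split; auto. symmetry; apply dw_eq; auto. }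
      destruct (f_cont k (dw (f k) v / 2)) as [del [Hd H]]. lra.
      exists (del, dw (f k) v / 2). simpl. repeat split; auto; lra.
    - exists (1, 1); simpl; repeat split; try lra; tauto. }
  pose (de := fun k => proj1_sig (constructive_indefinite_description _ (Hex k))).
  assert (Hde : forall k, 0 < fst (de k) /\ 0 < snd (de k) /\
     (K k -> snd (de k) <= dw (f k) v / 2 /\ forall w, dw k w < fst (de k) -> dw (f k) (f w) < snd (de k))).
  { intro k; unfold de; destruct constructive_indefinite_description; auto. }
  destruct (compact_closed_cover K (fun k w => K k /\ dw k w < fst (de k)) HK) as [L HL].
  - intros k w [Hk Hw]. exists (fst (de k) - dw k w). split; [lra|]. intros w' Hw'. split; auto.
    pose proof (dw_tri k w w'); lra.
  - intros w Hw. exists w. rewrite dw_refl. split; auto. apply Hde.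
  - pose (r := fold_right (fun k r => Rmin (snd (de k)) r) 1 L).
    assert (Hr : 0 < r /\ forall k, In k L -> r <= snd (de k)).
    { unfold r; clear HL; induction L as [|c l IH]; simpl. split; [lra|tauto].
      destruct IH as [IH1 IH2]. split. apply Rmin_glb_lt; auto; apply Hde.
      intros k [<-|Hk]. apply Rmin_l. eapply Rle_trans; [apply Rmin_r|auto]. }
    exists r. split; [apply Hr|]. intros v' Hv' [w [Hw ->]].
    destruct (HL w Hw) as [k [Hk [HKk Hkw]]]. destruct (Hde k) as [_ [_ H]]. destruct (H HKk) as [H1 H2].
    specialize (H2 w Hkw). destruct Hr as [_ Hr]. specialize (Hr k Hk).
    pose proof (dw_tri (f k) (f w) v). rewrite (dw_sym (f w) v) in H0. lra.
Qed.

Lemma nuI_inv U : opn U -> nuI (fun w => U (f w)) = nuI U.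
Proof. intro HU. apply Rle_antisym.
  - apply nuI_le. intros K HK HKU. eapply Rle_trans. apply nu_mono with (B := fun w => (fun v => exists k, K k /\ v = f k) (f w)).
    intros w Hw; exists w; auto. rewrite (nu_inv (fun v => exists k, K k /\ v = f k)). apply nuI_ge. apply img_closed; auto.
    intros v [k [Hk ->]]; auto.
  - apply nuI_le. intros K HK HKU. rewrite <- (nu_inv K). apply nuI_ge. apply closed_pre; auto. intros w Hw; auto. Qed.

Lemma mu_inv A : mu (fun w => A (f w)) = mu A.
Proof. apply Rle_antisym.
  - apply mu_ge. intros U HU HAU. rewrite <- nuI_inv; auto. apply mu_le. apply open_pre; auto. auto.
  - apply mu_ge. intros V HV HAV.
    set (U := fun v => ~ exists k, ~ V k /\ v = f k).
    assert (HUo : opn U) by (apply img_closed, open_closed_compl; auto).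
    apply Rle_trans with (nuI U). apply mu_le; auto. intros a Ha [k [Hk ->]]. apply Hk, HAV; auto.
    rewrite <- nuI_inv; auto. apply nuI_mono. intros w Hw. apply NNPP; intro Hn. apply Hw. exists w; auto. Qed.


End Meas.

Section UL.
Variable U : (nat -> Prop) -> Prop.
Hypothesis Utail : forall m, U (fun k => (m <= k)%nat).
Hypothesis Unot : ~ U (fun _ => False).
Hypothesis Uand : forall A B, U A -> U B -> U (fun k => A k /\ B k).
Hypothesis Umono : forall A B : nat -> Prop, (forall k, A k -> B k) -> U A -> U B.
Hypothesis Uult : forall A, U A \/ U (fun k => ~ A k).

Definition ulim (s : nat -> R) := Sup (fun r => U (fun k => r <= s k)).

Definition bnd (s : nat -> R) := forall k, 0 <= s k <= 1.

Lemma ulim_spec s : bnd s -> forall e, 0 < e -> U (fun k => Rabs (s k - ulim s) < e).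
Proof.
  intros Hs e He. set (E := fun r => U (fun k => r <= s k)).
  assert (HE1 : exists r, E r). { exists 0. apply Umono with (fun k => (0 <= k)%nat). intros; apply Hs. auto. }
  assert (HE2 : bound E). { exists 1. intros r Hr. destruct (Rle_dec r 1); auto. exfalso. apply Unot.
    apply Umono with (fun k => r <= s k); auto. intros k Hk. specialize (Hs k). lra. }
  assert (H1 : U (fun k => ulim s - e < s k)).
  { destruct (Sup_approx E e HE1 HE2 He) as [r [Hr Hr']]. apply Umono with (fun k => r <= s k); auto.
    intros k Hk. change (ulim s) with (Sup E). lra. }
  assert (H2 : U (fun k => s k < ulim s + e)).
  { destruct (Uult (fun k => s k < ulim s + e)) as [H|H]; auto. exfalso.
    assert (E (ulim s + e)). { apply Umono with (fun k => ~ s k < ulim s + e); auto. intros k Hk; lra. }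
    assert (ulim s + e <= ulim s) by (apply (Sup_ub E); auto). lra. }
  apply Umono with (fun k => ulim s - e < s k /\ s k < ulim s + e). intros k [Ha Hb]. apply Rabs_def1; lra.
  apply Uand; auto.
Qed.

Lemma ulim_unique s l l' : (forall e, 0 < e -> U (fun k => Rabs (s k - l) < e)) ->
  (forall e, 0 < e -> U (fun k => Rabs (s k - l') < e)) -> l = l'.
Proof. intros H H'. apply NNPP; intro Hn. set (e := Rabs (l - l') / 2).
  assert (He : 0 < e). { unfold e. assert (l - l' <> 0) by lra. pose proof (Rabs_pos_lt _ H0). lra. }
  apply Unot. apply Umono with (fun k => Rabs (s k - l) < e /\ Rabs (s k - l') < e).
  intros k [h1 h2]. assert (Rabs (l - l') <= Rabs (s k - l) + Rabs (s k - l')).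
  { replace (l - l') with (- (s k - l) + (s k - l')) by ring. eapply Rle_trans. apply Rabs_triang. rewrite Rabs_Ropp; lra. }
  unfold e in *; lra. apply Uand; auto. Qed.

Lemma ulim_add s t : bnd s -> bnd t -> bnd (fun k => s k + t k) -> ulim (fun k => s k + t k) = ulim s + ulim t.
Proof. intros Hs Ht Hst. symmetry. apply ulim_unique with (fun k => s k + t k); [|apply ulim_spec; auto].
  intros e He. apply Umono with (fun k => Rabs (s k - ulim s) < e/2 /\ Rabs (t k - ulim t) < e/2).
  intros k [h1 h2]. replace (s k + t k - (ulim s + ulim t)) with ((s k - ulim s) + (t k - ulim t)) by ring.
  eapply Rle_lt_trans. apply Rabs_triang. lra. apply Uand; apply ulim_spec; auto; lra. Qed.

Lemma ulim_le s t : bnd s -> bnd t -> (forall k, s k <= t k) -> ulim s <= ulim t.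
Proof. intros Hs Ht H. apply Rnot_lt_le; intro Hlt. set (e := (ulim s - ulim t) / 2).
  apply Unot. apply Umono with (fun k => Rabs (s k - ulim s) < e /\ Rabs (t k - ulim t) < e).
  intros k [h1 h2]. apply Rabs_def2 in h1; apply Rabs_def2 in h2. destruct h1, h2. specialize (H k). unfold e in *; lra.
  apply Uand; apply ulim_spec; auto; unfold e; lra. Qed.

Lemma ulim_close s t : bnd s -> bnd t -> (forall e, 0 < e -> U (fun k => Rabs (s k - t k) < e)) -> ulim s = ulim t.
Proof. intros Hs Ht H. apply ulim_unique with s; [apply ulim_spec; auto|].
  intros e He. apply Umono with (fun k => Rabs (s k - t k) < e/2 /\ Rabs (t k - ulim t) < e/2).
  intros k [h1 h2]. replace (s k - ulim t) with ((s k - t k) + (t k - ulim t)) by ring.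
  eapply Rle_lt_trans. apply Rabs_triang. lra. apply Uand; [apply H|apply ulim_spec]; auto; lra. Qed.

Lemma ulim_const c : 0 <= c <= 1 -> ulim (fun _ => c) = c.
Proof. intro Hc. apply ulim_unique with (fun _ => c). apply ulim_spec. intro; auto.
  intros e He. apply Umono with (fun k => (0 <= k)%nat); auto. intros. rewrite Rminus_diag, Rabs_R0; auto. Qed.

End UL.

Lemma count_in_S F a n : count_in F a (S n) = (count_in F a n + (if F (a + n)%nat then 1 else 0))%nat.
Proof. unfold count_in. rewrite seq_S, filter_app, length_app. simpl. destruct (F (a+n)%nat); simpl; lia. Qed.

Lemma count_in_le F a n : (count_in F a n <= n)%nat.
Proof. induction n; [unfold count_in; simpl; lia|]. rewrite count_in_S. destruct (F (a+n)%nat); lia. Qed.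

Lemma count_mono (F G : nat -> bool) a b n : (forall i, (i < n)%nat -> G (b + i)%nat = true -> F (a + i)%nat = true) ->
  (count_in G b n <= count_in F a n)%nat.
Proof. induction n; intro H; [unfold count_in; simpl; lia|]. rewrite !count_in_S.
  assert (count_in G b n <= count_in F a n)%nat by (apply IHn; intros; apply H; auto; lia).
  specialize (H n). destruct (G (b+n)%nat), (F (a+n)%nat); try lia. Qed.

Lemma ccount_count_in (P : nat -> Prop) F n : (forall i, (i < n)%nat -> P i -> F i = false) ->
  (ccount P 0 n + count_in F 0 n <= n)%nat.
Proof. induction n; intro H; [unfold count_in; simpl; lia|]. simpl ccount. rewrite count_in_S. simpl.
  assert (ccount P 0 n + count_in F 0 n <= n)%nat by (apply IHn; intros; apply H; auto; lia).
  unfold ind; destruct excluded_middle_informative as [Hp|Hp].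
  - rewrite (H n); auto. lia.
  - destruct (F n); lia. Qed.

Lemma ccount_count_in_eq (P : nat -> Prop) F a n : (forall i, P i <-> F i = false) ->
  (ccount P a n + count_in F a n = n)%nat.
Proof. intro H; induction n; [unfold count_in; simpl; lia|]. simpl ccount. rewrite count_in_S.
  unfold ind; destruct excluded_middle_informative as [Hp|Hp].
  - apply H in Hp. rewrite Hp. lia.
  - destruct (F (a+n)%nat) eqn:E. lia. exfalso; apply Hp, H; auto. Qed.

Section PartA.
Variables (X : Type) (d : X -> X -> R) (T : X -> X) (x y : X).
Hypothesis Hm : is_metric X d.
Hypothesis Hcont : continuous_map X d T.

Lemma cont_iter n z e : 0 < e -> exists del, 0 < del /\ forall z', d z z' < del -> d (iterate T n z) (iterate T n z') < e.
Proof. revert e. induction n; intros e He; simpl.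
  - exists e; auto.
  - destruct (Hcont (iterate T n z) e He) as [d1 [Hd1 H1]]. destruct (IHn d1 Hd1) as [d2 [Hd2 H2]].
    exists d2; split; auto. Qed.

Lemma cont_window z a n e : 0 < e -> exists del, 0 < del /\ forall z', d z z' < del ->
  forall i, (i < n)%nat -> d (iterate T (a + i) z) (iterate T (a + i) z') < e.
Proof. intro He. induction n.
  - exists 1; split; [lra|]. intros; lia.
  - destruct IHn as [d1 [Hd1 H1]]. destruct (cont_iter (a + n) z e He) as [d2 [Hd2 H2]].
    exists (Rmin d1 d2). split; [apply Rmin_glb_lt; auto|]. intros z' Hz' i Hi.
    pose proof (Rmin_l d1 d2); pose proof (Rmin_r d1 d2).
    destruct (Nat.eq_dec i n) as [->|]; [apply H2; lra|apply H1; [lra|lia]]. Qed.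

Definition good (p : X * X) (e : R) := fun k => if Rlt_dec (d (iterate T k (fst p)) (iterate T k (snd p))) e then true else false.

Lemma partA : banach_proximal d T x y -> forall e lam, 0 < e -> lam < 1 -> exists N, (1 <= N)%nat /\
  forall p, oc X d T x y p -> forall a n, (N <= n)%nat -> lam * INR n <= INR (count_in (good p e) a n).
Proof.
  intros BP e lam He Hl. destruct (BP (e/3) ltac:(lra) lam Hl) as [N [HN1 HN]].
  exists N; split; auto. intros p Hp a n Hn.
  destruct (cont_window (fst p) a n (e/3) ltac:(lra)) as [d1 [Hd1 H1]].
  destruct (cont_window (snd p) a n (e/3) ltac:(lra)) as [d3 [Hd3 H3]].
  destruct (Hp (Rmin d1 d3)) as [m Hmp]. apply Rmin_glb_lt; auto.
  apply (d2_lt X d) in Hmp. destruct Hmp as [Hm1 Hm2]. simpl in Hm1, Hm2.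
  pose proof (Rmin_l d1 d3); pose proof (Rmin_r d1 d3).
  eapply Rle_trans. apply (HN (m + a)%nat n Hn). apply le_INR. apply count_mono.
  intros i Hi. unfold good. destruct Rlt_dec as [Hg|]; [|discriminate]. intros _.
  destruct Rlt_dec as [|Hng]; auto. exfalso; apply Hng.
  specialize (H1 (iterate T m x) ltac:(lra) i Hi). specialize (H3 (iterate T m y) ltac:(lra) i Hi).
  rewrite <- !iterate_add in H1, H3. replace (a + i + m)%nat with (m + a + i)%nat in H1, H3 by lia.
  pose proof (d_tri X d Hm (iterate T (a + i) (fst p)) (iterate T (m + a + i) x) (iterate T (a + i) (snd p))) as T1.
  pose proof (d_tri X d Hm (iterate T (m + a + i) x) (iterate T (m + a + i) y) (iterate T (a + i) (snd p))) as T2.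
  rewrite (d_sym X d Hm (iterate T (m + a + i) y)) in T2. lra.
Qed.

End PartA.

Section BorelFacts.
Variables (W : Type) (dw : W -> W -> R).
Notation Bor := (Defs.borel W dw).

Lemma borel_or A B : Bor A -> Bor B -> Bor (fun w => A w \/ B w).
Proof. intros HA HB. apply borel_ext with (fun w => exists n, (match n with O => A | _ => B end) w).
  apply borel_union. intros [|n]; auto. intro w; split. intros [[|n] H]; auto. intros [H|H]. exists O; auto. exists 1%nat; auto. Qed.
Lemma borel_and A B : Bor A -> Bor B -> Bor (fun w => A w /\ B w).
Proof. intros HA HB. apply borel_ext with (fun w => ~ (~ A w \/ ~ B w)).
  apply borel_compl, borel_or; apply borel_compl; auto. intro w; tauto. Qed.
Lemma borel_false : Bor (fun _ => False).
Proof. apply borel_open. intros _ []. Qed.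
Lemma borel_true : Bor (fun _ => True).
Proof. apply borel_open. intros z _. exists 1; split; auto; lra. Qed.
Lemma borel_pre (f : W -> W) A : (forall u e, 0 < e -> exists del, 0 < del /\ forall v, dw u v < del -> dw (f u) (f v) < e) ->
  Bor A -> Bor (fun w => A (f w)).
Proof. intros Hf. induction 1.
  - apply borel_open. intros z Hz. destruct (H (f z) Hz) as [e [He H']]. destruct (Hf z e He) as [del [Hd Hd']].
    exists del; split; auto.
  - apply borel_compl; auto.
  - apply borel_union; auto.
  - apply borel_ext with (fun w => A (f w)); auto. Qed.

Variable m : (W -> Prop) -> R.
Hypothesis Hm : prob_measure W dw m.

Lemma pm_false : m (fun _ => False) = 0.
Proof. destruct Hm as [_ [_ Hc]].
  specialize (Hc (fun _ => fun _ => False) (fun _ => borel_false) (fun _ _ _ _ h _ => h)). cbv beta in Hc.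
  replace (fun y => exists n : nat, (fun _ : W => False) y) with (fun _ : W => False) in Hc by (apply pext; intro; split; [tauto|intros [_ h]; auto]).
  set (c := m (fun _ => False)) in *.
  assert (Hs : forall N, sum_f_R0 (fun _ => c) N = INR (S N) * c).
  { induction N; simpl; [lra|]. rewrite IHN. simpl. destruct N; simpl; lra. }
  apply NNPP; intro Hn. destruct (Hc (Rabs c) (Rabs_pos_lt c Hn)) as [N HN].
  specialize (HN (S N) ltac:(lia)). unfold R_dist in HN. rewrite Hs in HN.
  replace (INR (S (S N)) * c - c) with (INR (S N) * c) in HN by (rewrite (S_INR (S N)); ring).
    rewrite Rabs_mult, Rabs_right in HN. pose proof (Rabs_pos_lt c Hn). assert (1 <= INR (S N)) by (rewrite S_INR; pose proof (pos_INR N); lra). nra.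
  apply Rle_ge, pos_INR. Qed.

Lemma pm_add A B : Bor A -> Bor B -> (forall w, A w -> B w -> False) -> m (fun w => A w \/ B w) = m A + m B.
Proof. intros HA HB Hd. destruct Hm as [_ [_ Hc]].
  set (C := fun n => match n with O => A | 1%nat => B | _ => fun _ : W => False end).
  specialize (Hc C). assert (Hu : (fun y => exists n, C n y) = (fun w => A w \/ B w)).
  { apply pext; intro w; split. intros [[|[|n]] H]; simpl in H; auto; tauto. intros [H|H]; [exists O|exists 1%nat]; auto. }
  rewrite Hu in Hc. apply UL_sequence with (fun N => sum_f_R0 (fun n => m (C n)) N).
  - apply Hc. intros [|[|n]]; simpl; auto; apply borel_false.
    intros [|[|a]] [|[|b]] w Hab; simpl; try tauto; eauto; intros; eapply Hd; eauto.
  - intros e He. exists 1%nat. intros n Hn. unfold R_dist.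
    assert (forall k, sum_f_R0 (fun n => m (C n)) (S k) = m A + m B).
    { induction k. simpl. auto. rewrite tech5, IHk. simpl. rewrite pm_false. lra. }
    destruct n as [|k]; [lia|]. rewrite H.
    rewrite Rminus_diag, Rabs_R0; auto. Qed.

Lemma pm_compl A : Bor A -> m A + m (fun w => ~ A w) = 1.
Proof. intro HA. rewrite <- pm_add; auto. replace (fun w => A w \/ ~ A w) with (fun _ : W => True). apply Hm.
  apply pext; intro w; split; auto; intros _; apply classic. apply borel_compl; auto. Qed.

Lemma pm_nonneg A : Bor A -> 0 <= m A. Proof. apply Hm. Qed.

Lemma pm_modular P Q : Bor P -> Bor Q -> m (fun w => P w \/ Q w) + m (fun w => P w /\ Q w) = m P + m Q.
Proof. intros HP HQ.
  assert (HQnP : Bor (fun w => Q w /\ ~ P w)) by (apply borel_and; auto; apply borel_compl; auto).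
  assert (h1 : m (fun w => P w \/ Q w) = m P + m (fun w => Q w /\ ~ P w)).
  { rewrite <- (pm_add P (fun w => Q w /\ ~ P w)); auto. f_equal. apply pext; intro w; tauto. intros w ? []; auto. }
  assert (h2 : m Q = m (fun w => P w /\ Q w) + m (fun w => Q w /\ ~ P w)).
  { rewrite <- (pm_add (fun w => P w /\ Q w) (fun w => Q w /\ ~ P w)); auto. f_equal. apply pext; intro w; destruct (classic (P w)); tauto.
    apply borel_and; auto. intros w [] []; auto. }
  lra. Qed.

Variable A : nat -> W -> Prop.
Hypothesis HA : forall n, Bor (A n).
Definition cnt N w := ccount (fun n => A n w) 0 N.
Definition Sset N j := fun w => (j <= cnt N w)%nat.

Lemma Sset_S N j : Sset (S N) (S j) = (fun w => Sset N (S j) w \/ (A N w /\ Sset N j w)).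
Proof. apply pext; intro w. unfold Sset, cnt. simpl ccount. unfold ind. destruct excluded_middle_informative as [h|h]; split.
  intro; right; split; auto; lia. intros [?|[_ ?]]; lia. intro; left; lia. intros [?|[? _]]; [lia|tauto]. Qed.

Lemma Sset_bor N j : Bor (Sset N j).
Proof. revert j; induction N; intro j.
  - destruct j. apply borel_ext with (fun _ => True). apply borel_true. intro; unfold Sset; split; intros; auto; lia.
    apply borel_ext with (fun _ => False). apply borel_false. intro; unfold Sset, cnt; simpl; split; intros; [tauto|lia].
  - destruct j. apply borel_ext with (fun _ => True). apply borel_true. intro; unfold Sset; split; intros; auto; lia.
    rewrite Sset_S. apply borel_or; auto. apply borel_and; auto. Qed.

Lemma Sset_big N j : (N < j)%nat -> m (Sset N j) = 0.
Proof. intro H. replace (Sset N j) with (fun _ : W => False). apply pm_false.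
  apply pext; intro w; unfold Sset, cnt. pose proof (ccount_le (fun n => A n w) 0 N). split; [tauto|lia]. Qed.

Lemma telescope (g : nat -> R) n : fsum (fun j => g j - g (S j)) n = g O - g n.
Proof. induction n; simpl; [lra|]. rewrite IHn; lra. Qed.

Lemma layer_cake N : fsum (fun n => m (A n)) N = fsum (fun j => m (Sset N (S j))) N.
Proof. induction N; auto.
  change (fsum (fun n => m (A n)) (S N)) with (fsum (fun n => m (A n)) N + m (A N)). rewrite IHN.
  assert (Hstep : forall j, m (Sset (S N) (S j)) = m (Sset N (S j)) + (m (fun w => A N w /\ Sset N j w) - m (fun w => A N w /\ Sset N (S j) w))).
  { intro j. rewrite Sset_S. pose proof (pm_modular (Sset N (S j)) (fun w => A N w /\ Sset N j w)) as Hmod. cbv beta in Hmod.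
    replace (fun w => Sset N (S j) w /\ (A N w /\ Sset N j w)) with (fun w => A N w /\ Sset N (S j) w) in Hmod.
    assert (Bor (Sset N (S j))) by apply Sset_bor. assert (Bor (fun w => A N w /\ Sset N j w)) by (apply borel_and; auto; apply Sset_bor).
    specialize (Hmod H H0). lra.
    apply pext; intro w; unfold Sset; split; intros; repeat match goal with h : _ /\ _ |- _ => destruct h end; repeat split; auto; lia. }
  rewrite (fsum_ext (fun j => m (Sset (S N) (S j))) (fun j => m (Sset N (S j)) + (m (fun w => A N w /\ Sset N j w) - m (fun w => A N w /\ Sset N (S j) w))) (S N)) by (intros; apply Hstep).
  rewrite fsum_plus, (telescope (fun j => m (fun w => A N w /\ Sset N j w))).
  change (fsum (fun j => m (Sset N (S j))) (S N)) with (fsum (fun j => m (Sset N (S j))) N + m (Sset N (S N))).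
  rewrite Sset_big by lia.
  replace (fun w => A N w /\ Sset N 0 w) with (A N) by (apply pext; intro w; unfold Sset; split; [intros; split; auto; lia|tauto]).
  replace (fun w => A N w /\ Sset N (S N) w) with (fun _ : W => False).
  rewrite pm_false. lra.
  apply pext; intro w; unfold Sset, cnt. pose proof (ccount_le (fun n => A n w) 0 N). split; [tauto|intros [_ h]; lia]. Qed.

Lemma layer_bound N R0 : 0 <= R0 -> (forall w, INR (cnt N w) <= R0) -> fsum (fun n => m (A n)) N <= R0.
Proof. intros H0 Hc. rewrite layer_cake.
  assert (Hf : forall j, 0 <= m (Sset N (S j)) <= 1 /\ (R0 < INR (S j) -> m (Sset N (S j)) = 0)).
  { intro j. split. split. apply pm_nonneg, Sset_bor. pose proof (pm_compl _ (Sset_bor N (S j))).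
    pose proof (pm_nonneg (fun w => ~ Sset N (S j) w) (borel_compl _ _ _ (Sset_bor N (S j)))). lra.
    intro Hlt. replace (Sset N (S j)) with (fun _ : W => False). apply pm_false.
    apply pext; intro w; unfold Sset; split; [tauto|]. intro Hle. apply le_INR in Hle. specialize (Hc w). lra. }
  assert (forall K, fsum (fun j => m (Sset N (S j))) K <= INR K /\ fsum (fun j => m (Sset N (S j))) K <= R0).
  { induction K. simpl; lra. change (fsum (fun j => m (Sset N (S j))) (S K)) with (fsum (fun j => m (Sset N (S j))) K + m (Sset N (S K))).
    destruct (Hf K) as [[h1 h2] h3]. rewrite S_INR. destruct (Rle_dec (INR (S K)) R0) as [Hle|Hlt].
    - rewrite S_INR in Hle. lra.
    - rewrite (h3 (Rnot_le_lt _ _ Hlt)). lra. }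
  apply H. Qed.

End BorelFacts.

Lemma iter_comm {A} (f : A -> A) n w : iterate f n (f w) = f (iterate f n w).
Proof. induction n; simpl; auto. rewrite IHn; auto. Qed.

Section Main.
Variables (X : Type) (d : X -> X -> R) (T : X -> X) (x y : X).
Hypothesis Hm : is_metric X d.
Hypothesis Hc : compact_space X d.
Hypothesis Hcont : continuous_map X d T.

Notation Zs := (Zsub d T x y).
Notation TTZ := (TTZ X d T x y Hcont).
Notation dz := (dZ d T x y).

Lemma iter_TTZ n w : proj1_sig (iterate TTZ n w) = (iterate T n (fst (proj1_sig w)), iterate T n (snd (proj1_sig w))).
Proof. induction n; simpl. destruct (proj1_sig w); auto. rewrite IHn. reflexivity. Qed.

Lemma open_far e : Defs.open_set Zs dz (fun w => e < d (fst (proj1_sig w)) (snd (proj1_sig w))).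
Proof. intros w Hw. exists ((d (fst (proj1_sig w)) (snd (proj1_sig w)) - e) / 2). split; [lra|].
  intros v Hv. unfold dz, dZ in Hv. apply (d2_lt X d) in Hv. destruct Hv as [h1 h2].
  pose proof (d_tri X d Hm (fst (proj1_sig w)) (fst (proj1_sig v)) (snd (proj1_sig w))).
  pose proof (d_tri X d Hm (fst (proj1_sig v)) (snd (proj1_sig v)) (snd (proj1_sig w))).
  rewrite (d_sym X d Hm (snd (proj1_sig v))) in H0. lra. Qed.

Lemma TTZ_cont' : forall u e, 0 < e -> exists del, 0 < del /\ forall v, dz u v < del -> dz (TTZ u) (TTZ v) < e.
Proof. intros; apply TTZ_cont; auto. Qed.

Lemma partB : banach_proximal d T x y -> forall z : Zs,
  supp (Zsub d T x y) (dZ d T x y) (preZ d T x y) z -> fst (proj1_sig z) = snd (proj1_sig z).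
Proof.
  intros BP z Hz. apply (d_eq X d Hm). apply Rle_antisym; [|apply (d_nonneg X d Hm)].
  apply le_epsilon. intros e He. rewrite Rplus_0_l.
  set (O := fun w : Zs => e < d (fst (proj1_sig w)) (snd (proj1_sig w))).
  assert (HO : Defs.borel Zs dz O) by (apply borel_open, open_far).
  apply Rnot_lt_le. intro Hlt. apply (Hz (fun w => ~ O w)); [|intros mu Hmu|exact Hlt].
  - unfold Defs.closed_set. intros w Hw. apply NNPP in Hw. destruct (open_far e w Hw) as [r [Hr H]].
    exists r; split; auto. intros v Hv Hn. apply Hn, H; auto.
  - destruct Hmu as [Hpm Hinv].
    assert (HmuO : mu O <= 0).
    { apply le_epsilon. intros del Hdel. rewrite Rplus_0_l.
      destruct (partA X d T x y Hm Hcont BP e (1 - del) He ltac:(lra)) as [N [HN1 HN]].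
      set (An := fun n (w : Zs) => O (iterate TTZ n w)).
      assert (HAn : forall n, Defs.borel Zs dz (An n)).
      { induction n. apply borel_ext with O; auto. intro; unfold An; simpl; tauto.
        apply borel_ext with (fun w => An n (TTZ w)). apply borel_pre; auto. apply TTZ_cont'.
        intro w. unfold An. rewrite iter_comm. simpl. tauto. }
      assert (HmuAn : forall n, mu (An n) = mu O).
      { induction n. reflexivity.
        rewrite <- IHn. replace (An (S n)) with (preZ d T x y (An n)). apply Hinv; auto.
        rewrite (preZ_eq X d T x y Hcont). apply pext; intro w. unfold An. rewrite iter_comm. simpl. tauto. }
      assert (Hb : fsum (fun n => mu (An n)) N <= (1 - (1 - del)) * INR N).
      { apply layer_bound with dz; auto. apply Rmult_le_pos; [lra|apply pos_INR].
        intro w. unfold cnt.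
        pose proof (ccount_count_in (fun n => An n w) (good X d T (proj1_sig w) e) N) as Hcc.
        assert (ccount (fun n => An n w) 0 N + count_in (good X d T (proj1_sig w) e) 0 N <= N)%nat.
        { apply Hcc. intros i _ Hi. unfold An, O in Hi. rewrite iter_TTZ in Hi. simpl in Hi.
          unfold good. destruct Rlt_dec; auto. lra. }
        pose proof (HN (proj1_sig w) (proj2_sig w) 0%nat N (Nat.le_refl N)).
        apply le_INR in H. rewrite plus_INR in H. lra. }
      rewrite (fsum_ext _ (fun _ => mu O)) in Hb by (intros; apply HmuAn).
      rewrite fsum_const in Hb. assert (1 <= INR N) by (apply (le_INR 1); auto). nra. }
    pose proof (pm_compl Zs dz mu Hpm O HO). pose proof (pm_nonneg Zs dz mu Hpm O HO). lra.
Qed.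

End Main.

Section PartC.
Variables (X : Type) (d : X -> X -> R) (T : X -> X) (x y : X).
Hypothesis Hm : is_metric X d.
Hypothesis Hc : compact_space X d.
Hypothesis Hcont : continuous_map X d T.

Notation Zs := (Zsub d T x y).
Notation TTZ := (TTZ X d T x y Hcont).
Notation dz := (dZ d T x y).
Notation zo := (zo X d T x y Hm).

Variable U : (nat -> Prop) -> Prop.
Hypothesis Utail : forall m, U (fun k => (m <= k)%nat).
Hypothesis Unot : ~ U (fun _ => False).
Hypothesis Uand : forall A B, U A -> U B -> U (fun k => A k /\ B k).
Hypothesis Umono : forall A B : nat -> Prop, (forall k, A k -> B k) -> U A -> U B.
Hypothesis Uult : forall A, U A \/ U (fun k => ~ A k).

Variables (e lam : R) (a n : nat -> nat).
Hypothesis He : 0 < e.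
Hypothesis Hlam : 0 < lam < 1.
Definition Fe := fun k => if Rlt_dec (d (iterate T k x) (iterate T k y)) e then true else false.
Hypothesis Hn : forall k, (S k <= n k)%nat.
Hypothesis Hwin : forall k, INR (count_in Fe (a k) (n k)) < lam * INR (n k).

Definition sq (A : Zs -> Prop) k := INR (ccount (fun i => A (zo i)) (a k) (n k)) / INR (n k).

Lemma n_pos k : 0 < INR (n k).
Proof. apply lt_0_INR. specialize (Hn k). lia. Qed.

Lemma div_bnd c m : 0 <= c <= m -> 0 < m -> 0 <= c / m <= 1.
Proof. intros Hcm Hm0. assert (Hi : m * / m = 1) by (field; lra). assert (0 < / m) by (apply Rinv_0_lt_compat; lra).
  unfold Rdiv. split; nra. Qed.

Lemma sq_bnd A : bnd (sq A).
Proof. intro k. unfold sq. apply div_bnd; [|apply n_pos]. split. apply pos_INR. apply le_INR, ccount_le. Qed.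

Definition nu (A : Zs -> Prop) := ulim U (sq A).

Lemma nu_nonneg A : 0 <= nu A.
Proof. unfold nu. rewrite <- (ulim_const U Utail Unot Uand Umono Uult 0) by lra.
  apply ulim_le; auto. intro; lra. apply sq_bnd. intro k; apply sq_bnd. Qed.

Lemma nu_add A B : (forall w, A w -> B w -> False) -> nu (fun w => A w \/ B w) = nu A + nu B.
Proof. intro Hd. unfold nu. rewrite <- ulim_add; auto. f_equal. apply functional_extensionality; intro k.
  unfold sq. rewrite ccount_or. rewrite plus_INR. field. apply Rgt_not_eq, n_pos. intros i; apply Hd.
  apply sq_bnd. apply sq_bnd. intro k. replace (sq A k + sq B k) with (sq (fun w => A w \/ B w) k). apply sq_bnd.
  unfold sq. rewrite ccount_or. rewrite plus_INR. field. apply Rgt_not_eq, n_pos. intros i; apply Hd. Qed.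

Lemma nu_full : nu (fun _ => True) = 1.
Proof. unfold nu. replace (sq (fun _ => True)) with (fun _ : nat => 1). apply ulim_const; auto. lra.
  apply functional_extensionality; intro k. unfold sq. rewrite ccount_true. field. apply Rgt_not_eq, n_pos. Qed.

Lemma nu_inv K : nu (fun w => K (TTZ w)) = nu K.
Proof. unfold nu. apply ulim_close; auto; try apply sq_bnd.
  intros eps Heps. destruct (archimed (/ eps)) as [Ha _].
  destruct (INR_unbounded (/ eps)) as [m Hmm].
  apply Umono with (fun k => (m <= k)%nat); auto. intros k Hk.
  unfold sq. replace (fun i => K (TTZ (zo i))) with (fun i => K (zo (S i))).
  2:{ apply functional_extensionality; intro i. rewrite zo_S; auto. }
  rewrite (ccount_shift (fun j => K (zo j))). destruct (ccount_shift1 (fun i => K (zo i)) (a k) (n k)) as [h1 h2].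
  apply le_INR in h1; apply le_INR in h2. rewrite plus_INR in h1, h2. simpl INR in h1, h2.
  pose proof (n_pos k). specialize (Hn k). apply le_INR in Hn. rewrite S_INR in Hn. apply le_INR in Hk.
  assert (/ eps < INR (n k)) by lra.
  assert (Hi : INR (n k) * / INR (n k) = 1) by (field; lra). assert (0 < / INR (n k)) by (apply Rinv_0_lt_compat; lra).
  assert (/ INR (n k) < eps).
  { apply Rlt_le_trans with (/ / eps). apply Rinv_lt_contravar; auto. apply Rmult_lt_0_compat; auto. apply Rinv_0_lt_compat; auto.
    rewrite Rinv_inv; lra. }
  unfold Rdiv. apply Rabs_def1; nra.
Qed.

Definition Bad := fun w : Zs => ~ d (fst (proj1_sig w)) (snd (proj1_sig w)) < e.

Lemma nu_bad : 1 - lam <= nu Bad.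
Proof. unfold nu. rewrite <- (ulim_const U Utail Unot Uand Umono Uult (1 - lam)) by lra.
  apply ulim_le; auto. intro; lra. apply sq_bnd. intro k. unfold sq.
  pose proof (ccount_count_in_eq (fun i => Bad (zo i)) Fe (a k) (n k)) as H.
  assert (ccount (fun i => Bad (zo i)) (a k) (n k) + count_in Fe (a k) (n k) = n k)%nat.
  { apply H. intro i. unfold Bad, Fe; simpl. destruct Rlt_dec; split; intro; try tauto; try discriminate. }
  apply (f_equal INR) in H0. rewrite plus_INR in H0. pose proof (Hwin k). pose proof (n_pos k).
  apply Rmult_le_reg_r with (INR (n k)); auto. unfold Rdiv. rewrite Rmult_assoc, Rinv_l by lra. lra. Qed.

Lemma Bad_closed : Defs.closed_set Zs dz Bad.
Proof. unfold Defs.closed_set. intros w Hw. unfold Bad in Hw. apply NNPP in Hw.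
  exists ((e - d (fst (proj1_sig w)) (snd (proj1_sig w))) / 2). split; [lra|].
  intros v Hv HB. apply HB. unfold dZ in Hv. apply (d2_lt X d) in Hv. destruct Hv as [h1 h2].
  pose proof (d_tri X d Hm (fst (proj1_sig v)) (fst (proj1_sig w)) (snd (proj1_sig v))).
  pose proof (d_tri X d Hm (fst (proj1_sig w)) (snd (proj1_sig w)) (snd (proj1_sig v))).
  rewrite (d_sym X d Hm (fst (proj1_sig v)) (fst (proj1_sig w))) in H. lra. Qed.

Lemma partC : (forall z : Zs, supp Zs dz (preZ d T x y) z -> fst (proj1_sig z) = snd (proj1_sig z)) -> False.
Proof.
  intro H2.
  pose proof (dz_nonneg X d T x y Hm) as h1. pose proof (dz_sym X d T x y Hm) as h2.
  pose proof (dz_tri X d T x y Hm) as h3. pose proof (dz_refl X d T x y Hm) as h4.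
  pose proof (dz_eq X d T x y Hm) as h5. pose proof (Zs_compact X d T x y Hm Hc) as h6.
  set (M := mu Zs dz nu).
  assert (HM : invariant_measure Zs dz (preZ d T x y) M).
  { split; [split; [|split]|].
    - exact (mu_full Zs dz nu nu_nonneg nu_add nu_full).
    - intros; exact (mu_nonneg Zs dz nu nu_nonneg nu_add nu_full A).
    - intros A HA Hd. apply (mu_countable_add Zs dz h1 h2 h3 h4 h6 nu nu_nonneg nu_add nu_full); auto.
      intro k; apply (borel_cmeas Zs dz h1 h2 h3 h4 h6 nu nu_nonneg nu_add nu_full); auto.
    - intros A HA. rewrite (preZ_eq X d T x y Hcont). unfold M.
      exact (mu_inv Zs dz h1 h2 h3 h4 h5 h6 nu nu_nonneg nu_add nu_full TTZ (TTZ_cont X d T x y Hcont) nu_inv A). }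
  assert (Hpos : 0 < M Bad).
  { eapply Rlt_le_trans; [|apply (mu_closed_ge Zs dz nu nu_nonneg nu_add nu_full Bad Bad_closed)].
    pose proof nu_bad. lra. }
  destruct (support_point Zs dz h1 h2 h3 h4 h6 nu nu_nonneg nu_add nu_full Bad Bad_closed Hpos) as [z [Hz Hsupp]].
  apply Hz. rewrite H2. rewrite (d_refl X d Hm). auto.
  intros C HC HC1. apply (support_in_closed Zs dz h1 h2 h3 h4 nu nu_nonneg nu_add nu_full z C); auto.
Qed.

End PartC.

Module UF.
From mathcomp Require Import all_boot classical_sets boolp filter.

Lemma ultra_nat : exists U : (nat -> Prop) -> Prop,
  (forall m, U (fun k => (m <= k)%coq_nat)) /\ ~ U (fun _ => False) /\
  (forall A B, U A -> U B -> U (fun k => A k /\ B k)) /\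
  (forall A B : nat -> Prop, (forall k, A k -> B k) -> U A -> U B) /\
  (forall A, U A \/ U (fun k => ~ A k)).
Proof.
have [G [GU sFG]] := ultraFilterLemma eventually_filter.
exists G; split; [|split; [|split; [|split]]].
- move=> m; apply: sFG; exists m => // k /= /leP.
  by [].
- move=> H; have h := @filter_not_empty _ G (@ultra_proper _ _ GU).
  by apply: h; rewrite (_ : set0 = fun _ => False).

- move=> A B GA GB; have := @filterI _ G (@ultra_proper _ _ GU) A B GA GB; by [].
- move=> A B AB GA; exact: (@filterS _ G (@ultra_proper _ _ GU) A B AB GA).
- move=> A; exact: (in_ultra_setVsetC A GU).
Qed.

End UF.

Theorem mainTheorem9 (X : Type) (d : X -> X -> R) (T : X -> X) (x y : X) :
  TDS X d T ->
  (banach_proximal d T x y <->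
     (forall z : Zsub d T x y,
        supp (Zsub d T x y) (dZ d T x y) (preZ d T x y) z ->
        fst (proj1_sig z) = snd (proj1_sig z))) /\
  (banach_proximal d T x y <->
     (forall p : X * X, orbit_closure d T x y p ->
        banach_proximal d T (fst p) (snd p))).
Proof.
  intros [_ [Hm [Hc Hcont]]]. split; split.
  - apply partB; auto.
  - intro H2. apply NNPP; intro nBP.
    apply not_all_ex_not in nBP. destruct nBP as [e nBP]. apply imply_to_and in nBP. destruct nBP as [He nBP].
    apply not_all_ex_not in nBP. destruct nBP as [lam nBP]. apply imply_to_and in nBP. destruct nBP as [Hlam1 nBP].
    set (F := fun k => if Rlt_dec (d (iterate T k x) (iterate T k y)) e then true else false) in *.
    assert (Hw : forall k, exists an : nat * nat, (S k <= snd an)%nat /\ INR (count_in F (fst an) (snd an)) < lam * INR (snd an)).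
    { intro k. apply NNPP; intro Hk. apply nBP. exists (S k). split; [lia|]. intros a n Hn.
      apply Rnot_lt_le. intro Hlt. apply Hk. exists (a, n). simpl; auto. }
    pose (an := fun k => proj1_sig (constructive_indefinite_description _ (Hw k))).
    assert (Han : forall k, (S k <= snd (an k))%nat /\ INR (count_in F (fst (an k)) (snd (an k))) < lam * INR (snd (an k))).
    { intro k; unfold an; destruct constructive_indefinite_description; auto. }
    assert (Hlam0 : 0 < lam).
    { destruct (Han O) as [h1 h2]. pose proof (pos_INR (count_in F (fst (an O)) (snd (an O)))).
      assert (1 <= INR (snd (an O))) by (apply (le_INR 1); auto). nra. }
    destruct UF.ultra_nat as [U [Ut [Un [Ua [Um Uu]]]]].
    apply (partC X d T x y Hm Hc Hcont U Ut Un Ua Um Uu e lam (fun k => fst (an k)) (fun k => snd (an k))); auto.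
    intro k; apply Han. intro k; apply Han.
  - intros BP p Hp eps Heps lam Hlam.
    destruct (partA X d T x y Hm Hcont BP eps lam Heps Hlam) as [N [HN1 HN]].
    exists N; split; auto. intros a n Hn. apply (HN p Hp a n Hn).
  - intro H. apply (H (x, y)). intros eps Heps. exists O. simpl. rewrite (d2_refl X d Hm). auto.
Qed.
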